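(* Let $a>0$. If either ($b\ge a+\frac12$ and $c\ge 2a$) or ($b\ge 2a$ and $c\ge a+\frac12$), subject to the condition $b+c>3a+\frac12$, then $(a,b,c)\in\mathcal{P}_{1,2}$. Moreover: (i) $(a,b,2a)\in\mathcal{P}_{1,2}$ if and only if $b>a+\frac12$, and for every $\delta>0$ and $x>0$, $${}_1F_2\left(a\,;a+\tfrac12+\delta,\,2a\,;-\tfrac{x^2}{4}\right)=\frac{2}{B\left(\delta,a+\frac12\right)}\int_0^1\mathbb{J}_{a-\frac12}^2\left(\frac{xt}{2}\right)(1-t^2)^{\delta-1}t^{2a}\,dt>0.$$ (ii) $(a,a+\frac12,c)\in\mathcal{P}_{1,2}$ if and only if $c>2a$, and for every $\epsilon>0$ and $x>0$, $${}_1F_2\left(a\,;a+\tfrac12,\,2a+\epsilon\,;-\tfrac{x^2}{4}\right)=\frac{2}{B(\epsilon,2a)}\int_0^1\mathbb{J}_{a-\frac12}^2\left(\frac{xt}{2}\right)(1-t^2)^{\epsilon-1}t^{4a-1}\,dt>0.$$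
   Context: For $a,b,c>0$, ${}_1F_2\left(a\,;b,c\,;-\frac{x^2}{4}\right)=\sum_{k=0}^\infty \frac{(a)_k}{k!\,(b)_k(c)_k}\left(-\frac{x^2}{4}\right)^k$, where $(\alpha)_k=\Gamma(\alpha+k)/\Gamma(\alpha)$. $\mathcal{P}_{1,2}$ denotes the set of all triples $(a,b,c)$ of positive reals such that this function is $>0$ for all $x>0$. For $\alpha>-1$, $\mathbb{J}_\alpha(x)={}_0F_1\left(\alpha+1\,;-\frac{x^2}{4}\right)=\Gamma(\alpha+1)(x/2)^{-\alpha}J_\alpha(x)$, with $J_\alpha$ the Bessel function of the first kind. $B$ denotes Euler's beta function. *)

(* Defs.v *)
From Stdlib Require Import Reals Factorial.
From Coquelicot Require Import Coquelicot.
Open Scope R_scope.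

Fixpoint poch (alpha : R) (k : nat) : R :=
  match k with
  | O => 1
  | S k' => poch alpha k' * (alpha + INR k')
  end.

(* 1F2(a; b, c; -x^2/4) as the sum of its power series. *)
Definition F12 (a b c x : R) : R :=
  Series (fun k => poch a k / (INR (Factorial.fact k) * poch b k * poch c k)
                   * (- x ^ 2 / 4) ^ k).

Definition P12 (a b c : R) : Prop :=
  0 < a /\ 0 < b /\ 0 < c /\ (forall x, 0 < x -> 0 < F12 a b c x).

(* Normalized Bessel function JJ_alpha(x) = 0F1(alpha+1; -x^2/4). *)
Definition JJ (alpha x : R) : R :=
  Series (fun k => (- x ^ 2 / 4) ^ k / (INR (Factorial.fact k) * poch (alpha + 1) k)).

Definition Beta (p q : R) : R :=
  RInt_gen (fun t => Rpower t (p - 1) * Rpower (1 - t) (q - 1))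
           (at_right 0) (at_left 1).

(* Main.v *)
Require Import Defs.
From Stdlib Require Import Reals.
From Coquelicot Require Import Coquelicot.
From Stdlib Require Import Lra Lia Psatz Factorial IndefiniteDescription.
Open Scope R_scope.

Lemma poch_pos al k : 0 < al -> 0 < poch al k.
Proof. intros H; induction k; simpl; [lra|]. apply Rmult_lt_0_compat; auto. pose proof (pos_INR k); lra. Qed.

Definition cF a b c (k:nat) := poch a k / (INR (fact k) * poch b k * poch c k).
Lemma F12_PS a b c x : F12 a b c x = PSeries (cF a b c) (- x^2/4).
Proof. reflexivity. Qed.

Definition entire (d : nat -> R) := forall x, CV_disk d x.

Lemma entire_CV d : entire d -> CV_radius d = p_infty.
Proof.
  intros H. destruct (CV_radius d) as [r| |] eqn:E; auto.
  - exfalso. pose proof (CV_radius_ge_0 d) as G. rewrite E in G. simpl in G.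
    assert (Hlt : Rbar_lt (CV_radius d) (Rabs (r+1))). { rewrite E. simpl. rewrite Rabs_pos_eq; lra. }
    apply (CV_disk_outside _ _ Hlt). apply ex_series_lim_0. apply ex_series_Rabs. apply H.
  - exfalso. pose proof (CV_radius_ge_0 d) as G. rewrite E in G. simpl in G. auto.
Qed.

Lemma entire_lt d x : entire d -> Rbar_lt (Rabs x) (CV_radius d).
Proof. intros H; rewrite entire_CV; simpl; auto. Qed.

Lemma entire_le d d' : (forall n, Rabs (d' n) <= Rabs (d n)) -> entire d -> entire d'.
Proof.
  intros H E x. unfold CV_disk. apply (@ex_series_le R_AbsRing R_CompleteNormedModule) with (b := fun n => Rabs (d n * x^n)).
  - intros n. change (norm (Rabs (d' n * x ^ n))) with (Rabs (Rabs (d' n * x ^ n))).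
    rewrite Rabs_Rabsolu, !Rabs_mult. apply Rmult_le_compat_r; [apply Rabs_pos| apply H].
  - apply E.
Qed.

Lemma lim_inv_S : is_lim_seq (fun n => / INR (S n)) 0.
Proof.
  apply (is_lim_seq_incr_1 (fun n => / INR n) 0).
  replace (Finite 0) with (Rbar_inv p_infty) by reflexivity.
  apply is_lim_seq_inv; [apply is_lim_seq_INR| discriminate].
Qed.

Lemma entire_invfact : entire (fun n => / INR (fact n)).
Proof.
  intros x. apply CV_disk_DAlembert with (l := 0); [| | left; auto].
  - intros n. apply Rinv_neq_0_compat. apply INR_fact_neq_0.
  - apply is_lim_seq_ext with (u := fun n => / INR (S n)); [|apply lim_inv_S].
    intros n. rewrite fact_simpl, mult_INR. rewrite Rabs_pos_eq.
    + field. split; [apply INR_fact_neq_0| apply not_0_INR; lia].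
    + pose proof (INR_fact_lt_0 n). pose proof (INR_fact_lt_0 (S n)).
      apply Rlt_le. apply Rdiv_lt_0_compat; apply Rinv_0_lt_compat; auto.
      rewrite fact_simpl, mult_INR in H0. auto.
Qed.

Lemma entire_expM M : entire (fun n => M ^ n / INR (fact n)).
Proof.
  intros x. unfold CV_disk.
  apply ex_series_ext with (a := fun n => Rabs (/ INR (fact n) * (M * x) ^ n)).
  - intros n. f_equal. rewrite Rpow_mult_distr. unfold Rdiv. ring.
  - apply entire_invfact.
Qed.

Lemma cF_bound a b c n : 0 < a -> 0 < b -> 0 < c ->
  Rabs (cF a b c n) <= ((1 + a/b)/c) ^ n / INR (fact n).
Proof.
  intros Ha Hb Hc. unfold cF.
  assert (Hp : forall al k, 0 < al -> 0 < poch al k) by (intros; apply poch_pos; auto).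
  pose proof (INR_fact_lt_0 n).
  rewrite Rabs_pos_eq.
  2:{ apply Rlt_le, Rdiv_lt_0_compat; auto. apply Rmult_lt_0_compat; [apply Rmult_lt_0_compat|]; auto. }
  assert (K : poch a n / (poch b n * poch c n) <= ((1 + a/b)/c) ^ n).
  { induction n as [|n IH].
    - simpl. lra.
    - simpl poch. simpl pow.
      assert (E : poch a n * (a + INR n) / (poch b n * (b + INR n) * (poch c n * (c + INR n)))
          = (poch a n / (poch b n * poch c n)) * ((a + INR n) / ((b + INR n) * (c + INR n)))).
      { field. pose proof (pos_INR n). pose proof (Hp b n Hb). pose proof (Hp c n Hc). repeat split; lra. }
      rewrite E. rewrite Rmult_comm.
      pose proof (pos_INR n).
      apply Rmult_le_compat.
      + apply Rlt_le, Rdiv_lt_0_compat; [lra|]. apply Rmult_lt_0_compat; lra.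
      + apply Rlt_le, Rdiv_lt_0_compat; [apply Hp; auto|]. apply Rmult_lt_0_compat; apply Hp; auto.
      + apply Rmult_le_reg_r with ((b + INR n) * (c + INR n)); [apply Rmult_lt_0_compat; lra|].
        unfold Rdiv. rewrite Rmult_assoc, Rinv_l, Rmult_1_r; [|apply Rgt_not_eq, Rmult_lt_0_compat; lra].
        apply Rmult_le_reg_r with (b * c); [apply Rmult_lt_0_compat; lra|].
        replace ((1 + a * / b) * / c * ((b + INR n) * (c + INR n)) * (b * c))
          with ((b + a) * (b + INR n) * (c + INR n)) by (field; lra).
        assert (0 <= (b + a) * (b + INR n) * c - (a + INR n) * (b * c)) by
          (replace ((b + a) * (b + INR n) * c - (a + INR n) * (b * c)) with ((b*b + a * INR n) * c) by ring;
           apply Rmult_le_pos; nra).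
        assert (0 <= (b + a) * (b + INR n) * INR n) by (apply Rmult_le_pos; nra).
        nra.
      + apply IH. apply INR_fact_lt_0. }
  replace (poch a n / (INR (fact n) * poch b n * poch c n)) with
    (poch a n / (poch b n * poch c n) / INR (fact n)).
  2:{ field. pose proof (Hp b n Hb). pose proof (Hp c n Hc). repeat split; lra. }
  unfold Rdiv at 1 3. apply Rmult_le_compat_r; [apply Rlt_le, Rinv_0_lt_compat; auto| exact K].
Qed.

Lemma entire_cF a b c : 0 < a -> 0 < b -> 0 < c -> entire (cF a b c).
Proof.
  intros. apply entire_le with (d := fun n => ((1 + a/b)/c) ^ n / INR (fact n)).
  - intros n. rewrite (Rabs_pos_eq (_ / _)). apply cF_bound; auto.
    apply Rlt_le, Rdiv_lt_0_compat; [apply pow_lt; apply Rdiv_lt_0_compat; [|auto]|apply INR_fact_lt_0].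
    assert (0 < a/b) by (apply Rdiv_lt_0_compat; auto). lra.
  - apply entire_expM.
Qed.

Lemma ball_R (x e y : R) : ball x e y <-> Rabs (y - x) < e.
Proof. split; intros H; exact H. Qed.

Lemma lim_intro {T} {F : (T -> Prop) -> Prop} {FF : Filter F} (f : T -> R) l :
  (forall eps, 0 < eps -> F (fun y => Rabs (f y - l) < eps)) -> filterlim f F (locally l).
Proof.
  intros H. apply filterlim_locally. intros eps. apply (H eps (cond_pos eps)).
Qed.

Lemma lim_elim {T} {F : (T -> Prop) -> Prop} {FF : Filter F} (f : T -> R) l :
  filterlim f F (locally l) -> forall eps, 0 < eps -> F (fun y => Rabs (f y - l) < eps).
Proof.
  intros H eps He. apply (proj1 (filterlim_locally f l) H (mkposreal eps He)).
Qed.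

Lemma pf_ex {T} {F : (T -> Prop) -> Prop} {FF : ProperFilter F} (P : T -> Prop) :
  F P -> exists x, P x.
Proof. intros H. destruct FF as [FE _]. apply FE; auto. Qed.

Lemma lim_unique {T} {F : (T -> Prop) -> Prop} {FF : ProperFilter F} (f : T -> R) l1 l2 :
  filterlim f F (locally l1) -> filterlim f F (locally l2) -> l1 = l2.
Proof.
  intros H1 H2. destruct (Req_dec l1 l2) as [E|E]; auto. exfalso.
  assert (Hd : 0 < Rabs (l1 - l2) / 2) by (apply Rdiv_lt_0_compat; [apply Rabs_pos_lt; lra|lra]).
  destruct (pf_ex _ (filter_and _ _ (lim_elim _ _ H1 _ Hd) (lim_elim _ _ H2 _ Hd))) as [x [A B]].
  assert (Rabs (l1 - l2) <= Rabs (f x - l1) + Rabs (f x - l2)).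
  { replace (l1 - l2) with (-(f x - l1) + (f x - l2)) by ring.
    eapply Rle_trans; [apply Rabs_triang|]. rewrite Rabs_Ropp. lra. }
  lra.
Qed.

Lemma lim_le {T} {F : (T -> Prop) -> Prop} {FF : ProperFilter F} (f : T -> R) l c :
  filterlim f F (locally l) -> F (fun x => c <= f x) -> c <= l.
Proof.
  intros H1 H2. destruct (Rle_dec c l) as [|N]; auto. exfalso.
  assert (Hd : 0 < c - l) by lra.
  destruct (pf_ex _ (filter_and _ _ (lim_elim _ _ H1 _ Hd) H2)) as [x [A B]].
  apply Rabs_def2 in A. lra.
Qed.

Lemma lim_ge {T} {F : (T -> Prop) -> Prop} {FF : ProperFilter F} (f : T -> R) l c :
  filterlim f F (locally l) -> F (fun x => f x <= c) -> l <= c.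
Proof.
  intros H1 H2. destruct (Rle_dec l c) as [|N]; auto. exfalso.
  assert (Hd : 0 < l - c) by lra.
  destruct (pf_ex _ (filter_and _ _ (lim_elim _ _ H1 _ Hd) H2)) as [x [A B]].
  apply Rabs_def2 in A. lra.
Qed.

Lemma lim_bound {T} {F : (T -> Prop) -> Prop} {FF : ProperFilter F} (f : T -> R) l B :
  filterlim f F (locally l) -> F (fun x => Rabs (f x) <= B) -> Rabs l <= B.
Proof.
  intros H1 H2. destruct (Rle_dec (Rabs l) B) as [|N]; auto. exfalso.
  assert (Hd : 0 < Rabs l - B) by lra.
  destruct (pf_ex _ (filter_and _ _ (lim_elim _ _ H1 _ Hd) H2)) as [x [A B']].
  assert (Rabs l <= Rabs (f x - l) + Rabs (f x)).
  { replace l with (-(f x - l) + f x) at 1 by ring. eapply Rle_trans; [apply Rabs_triang|].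
    rewrite Rabs_Ropp. lra. }
  lra.
Qed.

Lemma lim_plus {T} {F : (T -> Prop) -> Prop} {FF : Filter F} (f g : T -> R) a b :
  filterlim f F (locally a) -> filterlim g F (locally b) ->
  filterlim (fun x => f x + g x) F (locally (a + b)).
Proof.
  intros H1 H2. apply lim_intro. intros eps He.
  assert (He2 : 0 < eps/2) by lra.
  apply (filter_imp (fun x => Rabs (f x - a) < eps/2 /\ Rabs (g x - b) < eps/2)).
  2:{ apply filter_and; [apply lim_elim; auto| apply lim_elim; auto]. }
  intros x [A B].
  replace (f x + g x - (a + b)) with ((f x - a) + (g x - b)) by ring.
  eapply Rle_lt_trans; [apply Rabs_triang|]. lra.
Qed.

Lemma lim_scal {T} {F : (T -> Prop) -> Prop} {FF : Filter F} (f : T -> R) a c :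
  filterlim f F (locally a) -> filterlim (fun x => c * f x) F (locally (c * a)).
Proof.
  intros H. apply lim_intro. intros eps He.
  assert (He2 : 0 < eps / (Rabs c + 1)) by (apply Rdiv_lt_0_compat; [lra| pose proof (Rabs_pos c); lra]).
  apply (filter_imp (fun x => Rabs (f x - a) < eps / (Rabs c + 1))); [|apply lim_elim; auto].
  intros x Hx.
  replace (c * f x - c * a) with (c * (f x - a)) by ring. rewrite Rabs_mult.
  pose proof (Rabs_pos c). pose proof (Rabs_pos (f x - a)).
  apply Rle_lt_trans with ((Rabs c + 1) * Rabs (f x - a)); [nra|].
  apply Rmult_lt_reg_l with (/ (Rabs c + 1)); [apply Rinv_0_lt_compat; lra|].
  rewrite <- Rmult_assoc, Rinv_l by lra. unfold Rdiv in Hx. lra.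
Qed.

Lemma lim_const {T} {F : (T -> Prop) -> Prop} {FF : Filter F} (c : R) :
  filterlim (fun _ : T => c) F (locally c).
Proof. apply lim_intro. intros eps He. apply filter_forall. intros _. unfold Rminus. rewrite Rplus_opp_r, Rabs_R0. auto. Qed.

Lemma lim_ext {T} {F : (T -> Prop) -> Prop} {FF : Filter F} (f g : T -> R) a :
  F (fun x => f x = g x) -> filterlim f F (locally a) -> filterlim g F (locally a).
Proof.
  intros E H. apply lim_intro. intros eps He.
  apply (filter_imp (fun x => f x = g x /\ Rabs (f x - a) < eps)); [|apply filter_and; auto; apply lim_elim; auto].
  intros x [A B]. rewrite <- A; auto.
Qed.

Lemma lim_sum {T} {F : (T -> Prop) -> Prop} {FF : Filter F} (e : nat -> R) (phi : nat -> T -> R) (l : nat -> R) :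
  (forall k, filterlim (phi k) F (locally (l k))) ->
  forall N, filterlim (fun x => sum_f_R0 (fun k => e k * phi k x) N) F (locally (sum_f_R0 (fun k => e k * l k) N)).
Proof.
  intros H N. induction N as [|N IH]; simpl.
  - apply lim_scal; auto.
  - apply lim_plus; auto. apply lim_scal; auto.
Qed.

Lemma at_right0_intro (P : R -> Prop) : (exists d, 0 < d /\ forall y, 0 < y < d -> P y) -> at_right 0 P.
Proof.
  intros [d [Hd H]]. exists (mkposreal d Hd). intros y By Hy. apply H. split; auto.
  change (Rabs (y - 0) < d) in By. apply Rabs_def2 in By. lra.
Qed.

Lemma at_right0_elim (P : R -> Prop) : at_right 0 P -> exists d, 0 < d /\ forall y, 0 < y < d -> P y.
Proof.
  intros [d H]. exists d. split; [apply cond_pos|]. intros y Hy. apply H; [|lra].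
  apply ball_R. rewrite Rminus_0_r, Rabs_pos_eq; lra.
Qed.

Lemma at_left1_intro (P : R -> Prop) : (exists d, 0 < d /\ forall y, 1 - d < y < 1 -> P y) -> at_left 1 P.
Proof.
  intros [d [Hd H]]. exists (mkposreal d Hd). intros y By Hy. apply H. split; auto.
  change (Rabs (y - 1) < d) in By. apply Rabs_def2 in By. lra.
Qed.

Lemma at_left1_elim (P : R -> Prop) : at_left 1 P -> exists d, 0 < d /\ forall y, 1 - d < y < 1 -> P y.
Proof.
  intros [d H]. exists d. split; [apply cond_pos|]. intros y Hy. apply H; [|lra].
  apply ball_R. apply Rabs_def1; lra.
Qed.

Lemma at_right0_01 : at_right 0 (fun y => 0 < y < 1).
Proof. apply at_right0_intro. exists 1. split; [lra|]. intros; lra. Qed.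
Lemma at_left1_01 : at_left 1 (fun y => 0 < y < 1).
Proof. apply at_left1_intro. exists 1. split; [lra|]. intros; lra. Qed.

Lemma mono_lim_right (P : R -> R) K :
  (forall x y, 0 < x -> x <= y -> y < 1 -> P x <= P y) ->
  (forall x, 0 < x < 1 -> - K <= P x) ->
  exists L, filterlim P (at_right 0) (locally L) /\ forall x, 0 < x < 1 -> L <= P x.
Proof.
  intros Hm Hb.
  set (E := fun z => exists y, 0 < y < 1 /\ z = - P y).
  assert (HE : bound E). { exists K. intros z [y [Hy ->]]. specialize (Hb y Hy). lra. }
  assert (HE2 : exists z, E z). { exists (- P (1/2)). exists (1/2). split; [lra|auto]. }
  destruct (completeness E HE HE2) as [m [Hub Hlub]].
  exists (- m). split.
  - apply lim_intro. intros eps He.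
    assert (Hx : exists y0, 0 < y0 < 1 /\ m - eps < - P y0).
    { apply Classical_Pred_Type.not_all_not_ex. intros N.
      assert (m <= m - eps); [|lra]. apply Hlub. intros z [y [Hy ->]].
      destruct (Rle_dec (- P y) (m - eps)) as [|n]; auto. exfalso. apply (N y). split; auto; lra. }
    destruct Hx as [y0 [Hy0 Hlt]].
    apply at_right0_intro. exists y0. split; [lra|]. intros y Hy.
    assert (- P y <= m) by (apply Hub; exists y; split; auto; lra).
    assert (P y <= P y0) by (apply Hm; lra).
    apply Rabs_def1; lra.
  - intros x Hx. assert (- P x <= m) by (apply Hub; exists x; auto). lra.
Qed.

Lemma mono_lim_left (P : R -> R) K :
  (forall x y, 0 < x -> x <= y -> y < 1 -> P x <= P y) ->
  (forall x, 0 < x < 1 -> P x <= K) ->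
  exists L, filterlim P (at_left 1) (locally L) /\ forall x, 0 < x < 1 -> P x <= L.
Proof.
  intros Hm Hb.
  set (E := fun z => exists y, 0 < y < 1 /\ z = P y).
  assert (HE : bound E). { exists K. intros z [y [Hy ->]]. apply Hb; auto. }
  assert (HE2 : exists z, E z). { exists (P (1/2)). exists (1/2). split; [lra|auto]. }
  destruct (completeness E HE HE2) as [m [Hub Hlub]].
  exists m. split.
  - apply lim_intro. intros eps He.
    assert (Hx : exists y0, 0 < y0 < 1 /\ m - eps < P y0).
    { apply Classical_Pred_Type.not_all_not_ex. intros N.
      assert (m <= m - eps); [|lra]. apply Hlub. intros z [y [Hy ->]].
      destruct (Rle_dec (P y) (m - eps)) as [|n]; auto. exfalso. apply (N y). split; auto; lra. }
    destruct Hx as [y0 [Hy0 Hlt]].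
    apply at_left1_intro. exists (1 - y0). split; [lra|]. intros y Hy.
    assert (P y <= m) by (apply Hub; exists y; split; auto; lra).
    assert (P y0 <= P y) by (apply Hm; lra).
    apply Rabs_def1; lra.
  - intros x Hx. apply Hub. exists x; auto.
Qed.

Lemma gen_of_prim (g Pr : R -> R) L0 L1 :
  (forall a b, 0 < a < 1 -> 0 < b < 1 -> is_RInt g a b (Pr b - Pr a)) ->
  filterlim Pr (at_right 0) (locally L0) -> filterlim Pr (at_left 1) (locally L1) ->
  is_RInt_gen g (at_right 0) (at_left 1) (L1 - L0).
Proof.
  intros HI H0 H1 P [eps HP].
  assert (He : 0 < eps / 2) by (pose proof (cond_pos eps); lra).
  apply Filter_prod with (Q := fun a => 0 < a < 1 /\ Rabs (Pr a - L0) < eps/2)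
                         (R := fun b => 0 < b < 1 /\ Rabs (Pr b - L1) < eps/2).
  - apply filter_and; [apply at_right0_01| apply lim_elim; auto].
  - apply filter_and; [apply at_left1_01| apply lim_elim; auto].
  - intros a b [Ha Ha'] [Hb Hb']. exists (Pr b - Pr a). split; [apply HI; auto|].
    apply HP. apply ball_R.
    replace (Pr b - Pr a - (L1 - L0)) with ((Pr b - L1) - (Pr a - L0)) by ring.
    eapply Rle_lt_trans; [apply Rabs_triang|]. rewrite Rabs_Ropp. lra.
Qed.

Lemma prim_RInt (g : R -> R) :
  (forall t, 0 < t < 1 -> continuous g t) ->
  forall a b, 0 < a < 1 -> 0 < b < 1 -> is_RInt g a b (RInt g (1/2) b - RInt g (1/2) a).
Proof.
  intros Hc a b Ha Hb.
  assert (Ex : forall u v, 0 < u < 1 -> 0 < v < 1 -> ex_RInt g u v).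
  { intros u v Hu Hv. apply (@ex_RInt_continuous R_CompleteNormedModule). intros z Hz. apply Hc.
    split; [eapply Rlt_le_trans; [|apply Hz]; apply Rmin_glb_lt; lra
           |eapply Rle_lt_trans; [apply Hz|]; apply Rmax_lub_lt; lra]. }
  assert (E : RInt g (1/2) a + RInt g a b = RInt g (1/2) b)
    by (apply (@RInt_Chasles R_CompleteNormedModule); apply Ex; lra).
  replace (RInt g (1/2) b - RInt g (1/2) a) with (RInt g a b) by lra.
  apply (@RInt_correct R_CompleteNormedModule). apply Ex; auto.
Qed.

Lemma RInt_pos_interval (g : R -> R) a b :
  a < b -> (forall t, a <= t <= b -> continuous g t) -> (forall t, a <= t <= b -> 0 <= g t) ->
  0 <= RInt g a b.
Proof.
  intros Hab Hc Hp. apply RInt_ge_0; [lra| |intros; apply Hp; lra].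
  apply (@ex_RInt_continuous R_CompleteNormedModule). intros z Hz. apply Hc. rewrite Rmin_left, Rmax_right in Hz; lra.
Qed.

Lemma int_pos (g : R -> R) t0 I :
  (forall t, 0 < t < 1 -> continuous g t) -> (forall t, 0 < t < 1 -> 0 <= g t) ->
  0 < t0 < 1 -> 0 < g t0 -> is_RInt_gen g (at_right 0) (at_left 1) I -> 0 < I.
Proof.
  intros Hc Hp Ht0 Hg0 HI.
  (* a small interval around t0 where g > g t0 / 2 *)
  assert (Hg2 : 0 < g t0 / 2) by lra.
  destruct (proj1 (filterlim_locally g (g t0)) (Hc t0 Ht0) (mkposreal _ Hg2)) as [d Hd].
  set (d' := Rmin (d/2) (Rmin (t0/2) ((1 - t0)/2))).
  assert (Hd'0 : 0 < d') by (unfold d'; pose proof (cond_pos d); repeat apply Rmin_glb_lt; lra).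
  assert (Hd'1 : d' <= d/2) by apply Rmin_l.
  assert (Hd'2 : d' <= t0/2) by (unfold d'; eapply Rle_trans; [apply Rmin_r| apply Rmin_l]).
  assert (Hd'3 : d' <= (1-t0)/2) by (unfold d'; eapply Rle_trans; [apply Rmin_r| apply Rmin_r]).
  set (lo := t0 - d'). set (hi := t0 + d').
  assert (Ex : forall u v, 0 < u < 1 -> 0 < v < 1 -> ex_RInt g u v).
  { intros u v Hu Hv. apply (@ex_RInt_continuous R_CompleteNormedModule). intros z Hz. apply Hc.
    split; [eapply Rlt_le_trans; [|apply Hz]; apply Rmin_glb_lt; lra
           |eapply Rle_lt_trans; [apply Hz|]; apply Rmax_lub_lt; lra]. }
  assert (Hmid : 2 * d' * (g t0 / 2) <= RInt g lo hi).
  { replace (2 * d' * (g t0 / 2)) with (RInt (fun _ => g t0 / 2) lo hi).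
    2:{ rewrite RInt_const. unfold lo, hi. simpl. unfold scal; simpl; unfold mult; simpl. ring. }
    apply RInt_le; [unfold lo, hi; lra| apply ex_RInt_const| apply Ex; unfold lo, hi; lra|].
    intros x Hx. assert (B : ball t0 d x).
    { apply ball_R. apply Rabs_def1; unfold lo, hi in Hx; lra. }
    specialize (Hd x B). change (Rabs (g x - g t0) < g t0 / 2) in Hd. apply Rabs_def2 in Hd. lra. }
  set (c := 2 * d' * (g t0 / 2)).
  assert (Hc0 : 0 < c) by (unfold c; nra).
  assert (Hcc : 0 < c / 2) by lra.
  specialize (HI (fun y => Rabs (y - I) < c / 2)).
  assert (HI' : filter_prod (at_right 0) (at_left 1) (fun ab => exists y, is_RInt g (fst ab) (snd ab) y /\ Rabs (y - I) < c/2)).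
  { apply HI. exists (mkposreal _ Hcc). intros y Hy. apply ball_R in Hy. auto. }
  destruct HI' as [Q R HQ HR HQR].
  destruct (@pf_ex _ (at_right 0) _ _ (filter_and _ _ HQ (filter_and _ _ at_right0_01 (at_right0_intro (fun a => a < lo) ltac:(exists lo; split; [unfold lo; lra| intros; lra]))))) as [a [Qa [Ha Hal]]].
  destruct (@pf_ex _ (at_left 1) _ _ (filter_and _ _ HR (filter_and _ _ at_left1_01 (at_left1_intro (fun b => hi < b) ltac:(exists (1 - hi); split; [unfold hi; lra| intros; lra]))))) as [b [Rb [Hb Hbh]]].
  destruct (HQR a b Qa Rb) as [y [Hy Hyl]]. simpl in Hy.
  assert (Ey : y = RInt g a lo + RInt g lo hi + RInt g hi b).
  { rewrite <- (@is_RInt_unique R_CompleteNormedModule g a b y Hy).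
    assert (E1 : RInt g a lo + RInt g lo hi = RInt g a hi)
      by (apply (@RInt_Chasles R_CompleteNormedModule); apply Ex; unfold lo, hi; lra).
    assert (E2 : RInt g a hi + RInt g hi b = RInt g a b)
      by (apply (@RInt_Chasles R_CompleteNormedModule); apply Ex; unfold lo, hi; lra).
    lra. }
  assert (0 <= RInt g a lo).
  { apply RInt_pos_interval; [lra| intros; apply Hc; unfold lo in *; lra| intros; apply Hp; unfold lo in *; lra]. }
  assert (0 <= RInt g hi b).
  { apply RInt_pos_interval; [lra| intros; apply Hc; unfold hi in *; lra| intros; apply Hp; unfold hi in *; lra]. }
  apply Rabs_def2 in Hyl. fold c in Hmid. lra.
Qed.

Lemma exs_scal (a : nat -> R) c : ex_series a -> ex_series (fun n => c * a n).
Proof. intros H. apply (@ex_series_scal_l R_AbsRing R_NormedModule c a H). Qed.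

Lemma tail_bound (e c : nat -> R) B N : ex_series (fun k => Rabs (e k)) -> (forall k, Rabs (c k) <= B) ->
  Rabs (Series (fun k => e k * c k) - sum_f_R0 (fun k => e k * c k) N)
    <= B * (Series (fun k => Rabs (e k)) - sum_f_R0 (fun k => Rabs (e k)) N).
Proof.
  intros He Hc.
  assert (exB : ex_series (fun k => B * Rabs (e k))) by (apply exs_scal; auto).
  assert (exa : ex_series (fun k => Rabs (e k * c k))).
  { apply (@ex_series_le R_AbsRing R_CompleteNormedModule) with (b := fun k => B * Rabs (e k)); auto.
    intros n. change (norm (Rabs (e n * c n))) with (Rabs (Rabs (e n * c n))).
    rewrite Rabs_Rabsolu, Rabs_mult, Rmult_comm. apply Rmult_le_compat_r; auto. apply Rabs_pos. }
  assert (exa' : ex_series (fun k => e k * c k)) by (apply ex_series_Rabs; auto).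
  rewrite (Series_incr_n (fun k => e k * c k) (S N)); [|lia|auto].
  rewrite (Series_incr_n (fun k => Rabs (e k)) (S N)); [|lia|auto].
  simpl Init.Nat.pred.
  replace (sum_f_R0 (fun k : nat => e k * c k) N + Series (fun k : nat => e (S N + k)%nat * c (S N + k)%nat) -
    sum_f_R0 (fun k : nat => e k * c k) N) with (Series (fun k : nat => e (S N + k)%nat * c (S N + k)%nat)) by ring.
  replace (sum_f_R0 (fun k : nat => Rabs (e k)) N + Series (fun k : nat => Rabs (e (S N + k)%nat)) -
    sum_f_R0 (fun k : nat => Rabs (e k)) N) with (Series (fun k : nat => Rabs (e (S N + k)%nat))) by ring.
  eapply Rle_trans; [apply Series_Rabs|].
  - apply (ex_series_incr_n (fun k => Rabs (e k * c k)) (S N)); auto.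
  - rewrite <- Series_scal_l. apply Series_le.
    + intros n. split; [apply Rabs_pos|]. rewrite Rabs_mult, Rmult_comm. apply Rmult_le_compat_r; auto. apply Rabs_pos.
    + apply (ex_series_incr_n (fun k => B * Rabs (e k)) (S N)); auto.
Qed.

Lemma tail_small (e : nat -> R) : ex_series (fun k => Rabs (e k)) ->
  forall eps, 0 < eps -> exists N0, forall N, (N0 <= N)%nat ->
    Series (fun k => Rabs (e k)) - sum_f_R0 (fun k => Rabs (e k)) N < eps.
Proof.
  intros He eps Heps. pose proof (Series_correct _ He) as HS.
  pose proof (lim_elim _ _ HS eps Heps) as [N0 HN0].
  exists N0. intros N HN. specialize (HN0 N HN). rewrite sum_n_Reals in HN0.
  apply Rabs_def2 in HN0. lra.
Qed.

Lemma series_bounded_ex (e c : nat -> R) B : ex_series (fun k => Rabs (e k)) -> (forall k, Rabs (c k) <= B) ->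
  ex_series (fun k => e k * c k).
Proof.
  intros He Hc. apply ex_series_Rabs.
  apply (@ex_series_le R_AbsRing R_CompleteNormedModule) with (b := fun k => B * Rabs (e k)); [|apply exs_scal; auto].
  intros n. change (norm (Rabs (e n * c n))) with (Rabs (Rabs (e n * c n))).
  rewrite Rabs_Rabsolu, Rabs_mult, Rmult_comm. apply Rmult_le_compat_r; auto. apply Rabs_pos.
Qed.

Lemma tannery {T} {F : (T -> Prop) -> Prop} {FF : ProperFilter F}
  (e : nat -> R) (phi : nat -> T -> R) (l : nat -> R) (B : R) :
  ex_series (fun k => Rabs (e k)) ->
  (forall k, filterlim (phi k) F (locally (l k))) ->
  F (fun x => forall k, Rabs (phi k x) <= B) ->
  filterlim (fun x => Series (fun k => e k * phi k x)) F (locally (Series (fun k => e k * l k))).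
Proof.
  intros He Hl HB.
  assert (Bl : forall k, Rabs (l k) <= B).
  { intros k. apply (lim_bound (phi k) (l k) B (Hl k)). eapply filter_imp; [|exact HB]. simpl; auto. }
  assert (B0 : 0 <= B) by (pose proof (Bl 0%nat); pose proof (Rabs_pos (l 0%nat)); lra).
  apply lim_intro. intros eps Heps.
  assert (Hd : 0 < eps / (4 * (B + 1))) by (apply Rdiv_lt_0_compat; lra).
  destruct (tail_small e He _ Hd) as [N HN]. specialize (HN N (le_n _)).
  assert (He2 : 0 < eps / 2) by lra.
  pose proof (lim_elim _ _ (lim_sum e phi l Hl N) _ He2) as Hfin.
  apply (filter_imp (fun x => (forall k, Rabs (phi k x) <= B) /\
     Rabs (sum_f_R0 (fun k => e k * phi k x) N - sum_f_R0 (fun k => e k * l k) N) < eps / 2)).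
  2:{ apply filter_and; auto. }
  intros x [Hx1 Hx2].
  pose proof (tail_bound e (fun k => phi k x) B N He Hx1) as T1.
  pose proof (tail_bound e l B N He Bl) as T2.
  set (TN := Series (fun k : nat => Rabs (e k)) - sum_f_R0 (fun k : nat => Rabs (e k)) N) in *.
  assert (TN0 : 0 <= TN).
  { pose proof (tail_bound e (fun _ => 1) 1 N He (fun _ => ltac:(cbv beta; rewrite Rabs_R1; lra))).
    pose proof (Rabs_pos (Series (fun k : nat => e k * 1) - sum_f_R0 (fun k : nat => e k * 1) N)). unfold TN; lra. }
  assert (B * TN <= eps / 4).
  { apply Rle_trans with ((B+1) * (eps / (4 * (B + 1)))); [apply Rmult_le_compat; lra|].
    right. field. lra. }
  match goal with |- Rabs (?A - ?D) < _ =>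
    replace (A - D) with ((A - sum_f_R0 (fun k => e k * phi k x) N)
        + (sum_f_R0 (fun k => e k * phi k x) N - sum_f_R0 (fun k => e k * l k) N)
        - (D - sum_f_R0 (fun k => e k * l k) N)) by ring end.
  eapply Rle_lt_trans; [apply Rabs_triang|]. rewrite Rabs_Ropp.
  eapply Rle_lt_trans; [apply Rplus_le_compat_r; apply Rabs_triang|]. lra.
Qed.

Lemma is_RInt_sum (e : nat -> R) (g : nat -> R -> R) a b :
  (forall k, ex_RInt (g k) a b) -> forall n,
  is_RInt (fun t => sum_f_R0 (fun k => e k * g k t) n) a b (sum_f_R0 (fun k => e k * RInt (g k) a b) n).
Proof.
  intros Hg n. induction n as [|n IH]; simpl.
  - apply (@is_RInt_scal R_NormedModule (g 0%nat) a b (e 0%nat)). apply (@RInt_correct R_CompleteNormedModule). auto.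
  - apply (@is_RInt_plus R_NormedModule); auto.
    apply (@is_RInt_scal R_NormedModule (g (S n)) a b (e (S n))). apply (@RInt_correct R_CompleteNormedModule). auto.
Qed.

Lemma RInt_series (e : nat -> R) (g : nat -> R -> R) (w : R -> R) (a b : R) :
  a <= b -> ex_series (fun k => Rabs (e k)) -> (forall k, ex_RInt (g k) a b) -> ex_RInt w a b ->
  ex_RInt (fun t => Series (fun k => e k * g k t)) a b ->
  (forall k t, a <= t <= b -> Rabs (g k t) <= w t) ->
  is_series (fun k => e k * RInt (g k) a b) (RInt (fun t => Series (fun k => e k * g k t)) a b).
Proof.
  intros Hab He Hg Hw Hs Hb.
  assert (Iw0 : 0 <= RInt w a b).
  { apply RInt_ge_0; auto. intros x Hx. eapply Rle_trans; [apply Rabs_pos| apply (Hb 0%nat); lra]. }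
  apply lim_intro. intros eps Heps.
  assert (Hd : 0 < eps / (RInt w a b + 1)) by (apply Rdiv_lt_0_compat; lra).
  destruct (tail_small e He _ Hd) as [N0 HN0].
  exists N0. intros n Hn. specialize (HN0 n Hn).
  set (Tn := Series (fun k : nat => Rabs (e k)) - sum_f_R0 (fun k : nat => Rabs (e k)) n) in *.
  assert (Tn0 : 0 <= Tn).
  { pose proof (tail_bound e (fun _ => 1) 1 n He (fun _ => ltac:(cbv beta; rewrite Rabs_R1; lra))).
    pose proof (Rabs_pos (Series (fun k : nat => e k * 1) - sum_f_R0 (fun k : nat => e k * 1) n)). unfold Tn; lra. }
  rewrite sum_n_Reals.
  pose proof (is_RInt_sum e g a b Hg n) as Hsum.
  rewrite <- (@is_RInt_unique R_CompleteNormedModule _ _ _ _ Hsum).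
  assert (Hdiff : is_RInt (fun t => Series (fun k => e k * g k t) - sum_f_R0 (fun k => e k * g k t) n) a b
              (RInt (fun t => Series (fun k => e k * g k t)) a b - RInt (fun t => sum_f_R0 (fun k => e k * g k t) n) a b)).
  { apply (@is_RInt_minus R_NormedModule). apply (@RInt_correct R_CompleteNormedModule); auto.
    apply (@RInt_correct R_CompleteNormedModule). eexists; eauto. }
  assert (Hw' : is_RInt (fun t => Tn * w t) a b (Tn * RInt w a b)).
  { apply (@is_RInt_scal R_NormedModule w a b Tn). apply (@RInt_correct R_CompleteNormedModule). auto. }
  assert (Hpt : forall t, a <= t <= b -> norm (Series (fun k : nat => e k * g k t) - sum_f_R0 (fun k : nat => e k * g k t) n) <= Tn * w t).
  { intros t Ht. change (norm (Series (fun k : nat => e k * g k t) - sum_f_R0 (fun k : nat => e k * g k t) n))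
         with (Rabs (Series (fun k : nat => e k * g k t) - sum_f_R0 (fun k : nat => e k * g k t) n)).
      rewrite Rmult_comm. apply tail_bound; [auto| intros k; apply Hb; auto]. }
  pose proof (norm_RInt_le _ _ a b _ _ Hab Hpt Hdiff Hw') as K.
  change (norm (RInt (fun t : R => Series (fun k : nat => e k * g k t)) a b -
              RInt (fun t : R => sum_f_R0 (fun k : nat => e k * g k t) n) a b))
    with (Rabs (RInt (fun t : R => Series (fun k : nat => e k * g k t)) a b -
              RInt (fun t : R => sum_f_R0 (fun k : nat => e k * g k t) n) a b)) in K.
  rewrite Rabs_minus_sym.
  eapply Rle_lt_trans; [exact K|].
  apply Rle_lt_trans with (eps / (RInt w a b + 1) * RInt w a b); [apply Rmult_le_compat_r; lra|].
  apply Rlt_le_trans with (eps / (RInt w a b + 1) * (RInt w a b + 1)); [apply Rmult_lt_compat_l; lra|].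
  right; field; lra.
Qed.

Lemma abs_le_elim x K : Rabs x <= K -> -K <= x <= K.
Proof. intros H. pose proof (Rle_abs x). pose proof (Rle_abs (-x)). rewrite Rabs_Ropp in H1. lra. Qed.

Lemma exp_mono x y : x <= y -> exp x <= exp y.
Proof. intros [H|H]; [left; apply exp_increasing; auto| right; subst; auto]. Qed.

Lemma rpow_pos x e : 0 < Rpower x e.
Proof. unfold Rpower. apply exp_pos. Qed.

Lemma rpow_le1 y e : 0 < y <= 1 -> 0 <= e -> Rpower y e <= 1.
Proof.
  intros Hy He. unfold Rpower. rewrite <- exp_0. apply exp_mono.
  assert (ln y <= 0) by (rewrite <- ln_1; apply ln_le; lra). nra.
Qed.

Lemma rpow_bound c y e : 0 < c -> c <= y -> y <= 1 -> Rpower y e <= 1 + Rpower c e.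
Proof.
  intros Hc Hcy Hy1. pose proof (rpow_pos c e). unfold Rpower in *.
  assert (ln y <= 0) by (rewrite <- ln_1; apply ln_le; lra).
  assert (ln c <= ln y) by (apply ln_le; lra).
  destruct (Rle_dec 0 e).
  - assert (exp (e * ln y) <= exp 0) by (apply exp_mono; nra). rewrite exp_0 in H2. lra.
  - assert (exp (e * ln y) <= exp (e * ln c)) by (apply exp_mono; nra). lra.
Qed.

Lemma rpow_small e : 0 < e -> forall eps, 0 < eps -> exists d, 0 < d /\ forall y, 0 < y < d -> Rpower y e < eps.
Proof.
  intros He eps Heps. exists (exp (ln eps / e)). split; [apply exp_pos|].
  intros y Hy. unfold Rpower.
  assert (ln y < ln eps / e).
  { rewrite <- (ln_exp (ln eps / e)). apply ln_increasing; lra. }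
  rewrite <- (exp_ln eps) by auto. apply exp_increasing.
  apply Rmult_lt_compat_l with (r := e) in H; auto. field_simplify in H; lra.
Qed.

Lemma rpow_deriv e x : 0 < x -> is_derive (fun t => Rpower t e) x (e * Rpower x (e - 1)).
Proof. intros Hx. apply is_derive_Reals. apply derivable_pt_lim_power; auto. Qed.

Lemma rpow_cont e x : 0 < x -> continuous (fun t => Rpower t e) x.
Proof. intros Hx. apply (@ex_derive_continuous R_AbsRing R_NormedModule). eexists. apply rpow_deriv; auto. Qed.

Lemma rpow_plus1 x e : 0 < x -> Rpower x (e + 1) = Rpower x e * x.
Proof. intros Hx. rewrite Rpower_plus, Rpower_1; auto. Qed.

Lemma rpow_m1 x e : 0 < x -> Rpower x (e - 1) = Rpower x e / x.
Proof.
  intros Hx. replace e with ((e - 1) + 1) at 2 by ring. rewrite rpow_plus1 by auto. field. lra.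
Qed.

Lemma rpow_comp_deriv (f : R -> R) df e x : 0 < f x -> is_derive f x df ->
  is_derive (fun t => Rpower (f t) e) x (df * (e * Rpower (f x) (e - 1))).
Proof.
  intros Hf Hd. apply (is_derive_comp (fun t => Rpower t e) f x); auto. apply rpow_deriv; auto.
Qed.

Definition w (r q t : R) := Rpower t (2 * r - 1) * Rpower (1 - t ^ 2) (q - 1).

Lemma w_pos r q t : 0 < w r q t.
Proof. unfold w. apply Rmult_lt_0_compat; apply rpow_pos. Qed.

Lemma w_deriv_ex r q t : 0 < t < 1 -> ex_derive (w r q) t.
Proof.
  intros Ht. unfold w. apply ex_derive_mult.
  - eexists; apply rpow_deriv; lra.
  - eexists. apply (rpow_comp_deriv (fun t => 1 - t^2)); [nra|]. auto_derive; auto.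
Qed.

Lemma w_cont r q t : 0 < t < 1 -> continuous (w r q) t.
Proof. intros Ht. apply (@ex_derive_continuous R_AbsRing R_NormedModule). apply w_deriv_ex; auto. Qed.

Lemma w_shift r q k t : 0 < t -> (t ^ 2) ^ k * w r q t = w (r + INR k) q t.
Proof.
  intros Ht. unfold w.
  replace (2 * (r + INR k) - 1) with ((2 * r - 1) + INR (2 * k)) by (rewrite mult_INR; simpl; ring).
  rewrite Rpower_plus, Rpower_pow by auto. rewrite pow_mult. ring.
Qed.

Lemma pow_le1 x n : 0 <= x <= 1 -> x ^ n <= 1.
Proof. intros H. induction n; simpl; [lra|]. pose proof (pow_le x n (proj1 H)). nra. Qed.

Lemma w_le r q k t : 0 < t < 1 -> w (r + INR k) q t <= w r q t.
Proof.
  intros Ht. rewrite <- w_shift by lra. pose proof (w_pos r q t).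
  assert ((t^2)^k <= 1) by (apply pow_le1; split; nra).
  pose proof (pow_le (t^2) k ltac:(nra)). nra.
Qed.

Definition Pw r q y := RInt (w r q) (1/2) y.

Lemma Pw_int r q a b : 0 < a < 1 -> 0 < b < 1 -> is_RInt (w r q) a b (Pw r q b - Pw r q a).
Proof. intros. apply prim_RInt; auto. intros; apply w_cont; auto. Qed.

Lemma Pw_mono r q x y : 0 < x -> x <= y -> y < 1 -> Pw r q x <= Pw r q y.
Proof.
  intros. assert (0 <= Pw r q y - Pw r q x); [|lra].
  apply (is_RInt_ge_0 (w r q) x y); auto. apply Pw_int; lra.
  intros; apply Rlt_le, w_pos.
Qed.

Lemma anti1_int r K a b : 0 < r -> 0 < a -> 0 < b ->
  is_RInt (fun t => K * Rpower t (2 * r - 1)) a b (K * Rpower b (2 * r) / (2 * r) - K * Rpower a (2 * r) / (2 * r)).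
Proof.
  intros Hr Ha Hb.
  apply (@is_RInt_derive R_CompleteNormedModule (fun t => K * Rpower t (2 * r) / (2 * r))).
  - intros x Hx. assert (0 < x) by (eapply Rlt_le_trans; [|apply Hx]; apply Rmin_glb_lt; lra).
    pose proof (rpow_deriv (2 * r) x H).
    apply (is_derive_ext (fun t => (K / (2 * r)) * Rpower t (2 * r))); [intros t; change (K / (2*r) * Rpower t (2*r) = K * Rpower t (2*r) / (2*r)); field; lra|].
    replace (K * Rpower x (2 * r - 1)) with (K / (2 * r) * (2 * r * Rpower x (2 * r - 1))) by (field; lra).
    apply (is_derive_scal (fun t => Rpower t (2 * r))). auto.
  - intros x Hx. assert (0 < x) by (eapply Rlt_le_trans; [|apply Hx]; apply Rmin_glb_lt; lra).
    apply (continuous_scal_r K (fun t => Rpower t (2 * r - 1))). apply rpow_cont; auto.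
Qed.

Lemma anti2_int q K a b : 0 < q -> 0 < a < 1 -> 0 < b < 1 ->
  is_RInt (fun t => K * (t * Rpower (1 - t ^ 2) (q - 1))) a b
     (- K * Rpower (1 - b ^ 2) q / (2 * q) - - K * Rpower (1 - a ^ 2) q / (2 * q)).
Proof.
  intros Hq Ha Hb.
  assert (Hin : forall x, Rmin a b <= x <= Rmax a b -> 0 < x < 1).
  { intros x Hx. split; [eapply Rlt_le_trans; [|apply Hx]; apply Rmin_glb_lt; lra
                        |eapply Rle_lt_trans; [apply Hx|]; apply Rmax_lub_lt; lra]. }
  apply (@is_RInt_derive R_CompleteNormedModule (fun t => - K * Rpower (1 - t ^ 2) q / (2 * q))).
  - intros x Hx. specialize (Hin x Hx).
    assert (D : is_derive (fun t => 1 - t ^ 2) x (- (2 * x))) by (auto_derive; auto; ring).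
    pose proof (rpow_comp_deriv (fun t => 1 - t^2) _ q x ltac:(simpl; nra) D) as D2.
    apply (is_derive_ext (fun t => (- K / (2 * q)) * Rpower (1 - t ^ 2) q)); [intros t; change (- K / (2*q) * Rpower (1 - t^2) q = - K * Rpower (1 - t^2) q / (2*q)); field; lra|].
    replace (K * (x * Rpower (1 - x ^ 2) (q - 1))) with (- K / (2 * q) * (- (2 * x) * (q * Rpower (1 - x ^ 2) (q - 1)))) by (field; lra).
    apply (is_derive_scal (fun t => Rpower (1 - t ^ 2) q)). auto.
  - intros x Hx. specialize (Hin x Hx).
    apply (continuous_scal_r K (fun t => t * Rpower (1 - t ^ 2) (q - 1))).
    apply (continuous_mult (fun t => t) (fun t => Rpower (1 - t ^ 2) (q - 1))); [apply continuous_id|].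
    apply (@ex_derive_continuous R_AbsRing R_NormedModule). eexists. apply (rpow_comp_deriv (fun t => 1 - t^2)); [simpl; nra|].
    auto_derive; auto.
Qed.

Lemma Pw_bound r q : 0 < r -> 0 < q -> exists K, forall y, 0 < y < 1 -> Rabs (Pw r q y) <= K.
Proof.
  intros Hr Hq.
  set (K1 := 1 + Rpower (3/4) (q - 1)).
  set (K2 := 1 + Rpower (1/2) (2 * r - 2)).
  assert (HK1 : 0 < K1) by (unfold K1; pose proof (rpow_pos (3/4) (q-1)); lra).
  assert (HK2 : 0 < K2) by (unfold K2; pose proof (rpow_pos (1/2) (2*r-2)); lra).
  set (C1 := K1 * Rpower (1/2) (2 * r) / (2 * r)).
  set (C2 := K2 * Rpower (3/4) q / (2 * q)).
  assert (HC1 : 0 <= C1) by (unfold C1; pose proof (rpow_pos (1/2) (2*r)); apply Rlt_le, Rdiv_lt_0_compat; nra).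
  assert (HC2 : 0 <= C2) by (unfold C2; pose proof (rpow_pos (3/4) q); apply Rlt_le, Rdiv_lt_0_compat; nra).
  exists (C1 + C2). intros y Hy.
  destruct (Rle_dec y (1/2)) as [Hy2|Hy2].
  -
    assert (E : Pw r q y <= Pw r q (1/2)) by (apply Pw_mono; lra).
    assert (E0 : Pw r q (1/2) = 0) by (unfold Pw; apply (@RInt_point R_CompleteNormedModule)).
    assert (Hi : is_RInt (w r q) y (1/2) (Pw r q (1/2) - Pw r q y)) by (apply Pw_int; lra).
    pose proof (anti1_int r K1 y (1/2) Hr ltac:(lra) ltac:(lra)) as Ha.
    pose proof (is_RInt_le _ _ y (1/2) _ _ Hy2 Hi Ha) as Hle.
    assert (Pw r q (1/2) - Pw r q y <= K1 * Rpower (1/2) (2 * r) / (2 * r) - K1 * Rpower y (2 * r) / (2 * r)).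
    { apply Hle. intros x Hx. unfold w. rewrite (Rmult_comm K1). apply Rmult_le_compat_l; [apply Rlt_le, rpow_pos|].
      unfold K1. apply rpow_bound; nra. }
    pose proof (rpow_pos y (2*r)).
    assert (0 <= K1 * Rpower y (2 * r) / (2 * r)) by (apply Rlt_le, Rdiv_lt_0_compat; nra).
    rewrite Rabs_left1 by lra. fold C1 in H. lra.
  - assert (E : Pw r q (1/2) <= Pw r q y) by (apply Pw_mono; lra).
    assert (E0 : Pw r q (1/2) = 0) by (unfold Pw; apply (@RInt_point R_CompleteNormedModule)).
    assert (Hi : is_RInt (w r q) (1/2) y (Pw r q y - Pw r q (1/2))) by (apply Pw_int; lra).
    pose proof (anti2_int q K2 (1/2) y Hq ltac:(lra) ltac:(lra)) as Ha.
    pose proof (is_RInt_le _ _ (1/2) y _ _ ltac:(lra) Hi Ha) as Hle.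
    assert (Pw r q y - Pw r q (1/2) <= - K2 * Rpower (1 - y ^ 2) q / (2 * q) - - K2 * Rpower (1 - (1/2) ^ 2) q / (2 * q)).
    { apply Hle. intros x Hx. unfold w.
      replace (Rpower x (2 * r - 1)) with (Rpower x (2 * r - 2) * x) by (rewrite <- rpow_plus1 by lra; f_equal; ring).
      assert (Rpower x (2 * r - 2) <= K2) by (unfold K2; apply rpow_bound; lra).
      pose proof (rpow_pos (1 - x^2) (q-1)). rewrite (Rmult_assoc (Rpower x (2 * r - 2))). apply Rmult_le_compat_r; auto. apply Rlt_le, Rmult_lt_0_compat; lra. }
    pose proof (rpow_pos (1 - y^2) q).
    assert (0 <= K2 * Rpower (1 - y ^ 2) q / (2 * q)) by (apply Rlt_le, Rdiv_lt_0_compat; nra).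
    replace (1 - (1/2)^2) with (3/4) in H by field.
    rewrite Rabs_pos_eq by lra. unfold C2. lra.
Qed.

Definition Mv r q : R := RInt_gen (w r q) (at_right 0) (at_left 1).

Lemma w_data r q : 0 < r -> 0 < q -> exists L0 L1 : R,
  filterlim (Pw r q) (at_right 0) (locally L0) /\ filterlim (Pw r q) (at_left 1) (locally L1) /\
  Mv r q = L1 - L0 /\ is_RInt_gen (w r q) (at_right 0) (at_left 1) (Mv r q) /\
  (forall y, 0 < y < 1 -> L0 <= Pw r q y <= L1).
Proof.
  intros Hr Hq. destruct (Pw_bound r q Hr Hq) as [K HK].
  destruct (mono_lim_right (Pw r q) K) as [L0 [H0 H0']].
  { intros; apply Pw_mono; auto. }
  { intros x Hx. specialize (HK x Hx). apply abs_le_elim in HK. lra. }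
  destruct (mono_lim_left (Pw r q) K) as [L1 [H1 H1']].
  { intros; apply Pw_mono; auto. }
  { intros x Hx. specialize (HK x Hx). apply abs_le_elim in HK. lra. }
  assert (G : is_RInt_gen (w r q) (at_right 0) (at_left 1) (L1 - L0)).
  { apply gen_of_prim with (Pr := Pw r q); auto. intros; apply Pw_int; auto. }
  assert (E : Mv r q = L1 - L0) by (apply is_RInt_gen_unique; auto).
  exists L0, L1. split; [auto|split; [auto|split; [auto|split; [rewrite E; auto|]]]]. intros y Hy; split; [apply H0'; auto|apply H1'; auto].
Qed.

Lemma Mv_pos r q : 0 < r -> 0 < q -> 0 < Mv r q.
Proof.
  intros Hr Hq. destruct (w_data r q Hr Hq) as [L0 [L1 [_ [_ [_ [G _]]]]]].
  apply (int_pos (w r q) (1/2)); auto.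
  - intros; apply w_cont; auto.
  - intros; apply Rlt_le, w_pos.
  - lra.
  - apply w_pos.
Qed.

Lemma cont_plus (f g : R -> R) x : continuous f x -> continuous g x -> continuous (fun y => f y + g y) x.
Proof. intros. apply (@continuous_plus R_UniformSpace R_AbsRing R_NormedModule f g x); auto. Qed.
Lemma cont_minus (f g : R -> R) x : continuous f x -> continuous g x -> continuous (fun y => f y - g y) x.
Proof. intros. apply (@continuous_minus R_UniformSpace R_AbsRing R_NormedModule f g x); auto. Qed.
Lemma cont_scal (f : R -> R) k x : continuous f x -> continuous (fun y => k * f y) x.
Proof. intros. apply (@continuous_scal_r R_UniformSpace R_AbsRing R_NormedModule k f x); auto. Qed.
Lemma cont_mult (f g : R -> R) x : continuous f x -> continuous g x -> continuous (fun y => f y * g y) x.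
Proof. intros. apply (@continuous_mult R_UniformSpace R_AbsRing f g x); auto. Qed.
Lemma der_mult (f g : R -> R) x df dg : is_derive f x df -> is_derive g x dg ->
  is_derive (fun y => f y * g y) x (df * g x + f x * dg).
Proof. intros. apply (is_derive_mult f g x df dg); auto. intros; apply Rmult_comm. Qed.
Lemma der_plus (f g : R -> R) x df dg : is_derive f x df -> is_derive g x dg ->
  is_derive (fun y => f y + g y) x (df + dg).
Proof. intros. apply (@is_derive_plus R_AbsRing R_NormedModule f g x df dg); auto. Qed.
Lemma der_minus (f g : R -> R) x df dg : is_derive f x df -> is_derive g x dg ->
  is_derive (fun y => f y - g y) x (df - dg).
Proof. intros. apply (@is_derive_minus R_AbsRing R_NormedModule f g x df dg); auto. Qed.
Lemma der_eq (f : R -> R) x l l' : is_derive f x l -> l = l' -> is_derive f x l'.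
Proof. intros H ->; auto. Qed.
Lemma der_ext (f g : R -> R) x l : (forall y, f y = g y) -> is_derive f x l -> is_derive g x l.
Proof. intros E H. apply (is_derive_ext f g x l); auto. Qed.

Lemma lim_combo {T} {F : (T -> Prop) -> Prop} {FF : Filter F} (f g : T -> R) a b c :
  filterlim f F (locally a) -> filterlim g F (locally b) ->
  filterlim (fun y => g y - c * (f y - g y)) F (locally (b - c * (a - b))).
Proof.
  intros Hf Hg.
  pose proof (lim_scal f a (-c) Hf) as h1. pose proof (lim_scal g b (1 + c) Hg) as h2.
  pose proof (lim_plus _ _ _ _ h2 h1) as h3.
  replace (b - c * (a - b)) with ((1 + c) * b + - c * a) by ring.
  eapply lim_ext; [|exact h3]. apply filter_forall. intros; ring.
Qed.

Definition U r q t := - (Rpower t (2 * r) * Rpower (1 - t ^ 2) q) / (2 * q).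

Lemma U_deriv r q t : 0 < q -> 0 < t < 1 ->
  is_derive (U r q) t (w (r + 1) q t - r / q * (w r q t - w (r + 1) q t)).
Proof.
  intros Hq Ht.
  assert (D1 := rpow_deriv (2 * r) t ltac:(lra)).
  assert (D0 : is_derive (fun t => 1 - t ^ 2) t (- (2 * t))) by (auto_derive; auto; ring).
  assert (D2 := rpow_comp_deriv (fun t => 1 - t ^ 2) _ q t ltac:(simpl; nra) D0).
  assert (D3 := der_mult _ _ _ _ _ D1 D2).
  assert (D4 := is_derive_scal _ _ (- / (2 * q)) _ D3).
  apply (der_ext (fun y => - / (2 * q) * (Rpower y (2 * r) * Rpower (1 - y ^ 2) q))).
  { intros y. unfold U. field. lra. }
  eapply der_eq; [exact D4|].
  unfold w.
  set (A := Rpower t (2 * r - 1)). set (Bq := Rpower (1 - t ^ 2) (q - 1)).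
  replace (Rpower t (2 * (r + 1) - 1)) with (A * t * t)
    by (unfold A; rewrite <- !rpow_plus1 by lra; f_equal; ring).
  replace (Rpower t (2 * r)) with (A * t) by (unfold A; rewrite <- !rpow_plus1 by lra; f_equal; ring).
  replace (Rpower (1 - t ^ 2) q) with (Bq * (1 - t ^ 2)) by (unfold Bq; rewrite <- !rpow_plus1 by nra; f_equal; ring).
  match goal with |- ?a = ?b => change (a = b :> R) end. field. lra.
Qed.

Lemma U_lim0 r q : 0 < r -> 0 < q -> filterlim (U r q) (at_right 0) (locally 0).
Proof.
  intros Hr Hq. apply lim_intro. intros eps He.
  destruct (rpow_small (2 * r) ltac:(lra) (2 * q * eps) ltac:(nra)) as [d [Hd Hs]].
  apply at_right0_intro. exists (Rmin d 1). split; [apply Rmin_glb_lt; lra|].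
  intros y Hy. assert (y < d) by (eapply Rlt_le_trans; [apply Hy| apply Rmin_l]).
  assert (y < 1) by (eapply Rlt_le_trans; [apply Hy| apply Rmin_r]).
  specialize (Hs y ltac:(lra)).
  assert (Rpower (1 - y ^ 2) q <= 1) by (apply rpow_le1; [split; nra|lra]).
  pose proof (rpow_pos y (2*r)). pose proof (rpow_pos (1 - y^2) q).
  unfold U. rewrite Rminus_0_r. rewrite Rabs_left.
  - apply Rmult_lt_reg_r with (2 * q); [lra|]. field_simplify; [|lra]. nra.
  - apply Rmult_lt_reg_r with (2 * q); [lra|]. field_simplify; [|lra]. nra.
Qed.

Lemma U_lim1 r q : 0 < r -> 0 < q -> filterlim (U r q) (at_left 1) (locally 0).
Proof.
  intros Hr Hq. apply lim_intro. intros eps He.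
  destruct (rpow_small q ltac:(lra) (2 * q * eps) ltac:(nra)) as [d [Hd Hs]].
  apply at_left1_intro. exists (Rmin (d/2) 1). split; [apply Rmin_glb_lt; lra|].
  intros y Hy. assert (1 - y < d/2) by (assert (Rmin (d/2) 1 <= d/2) by apply Rmin_l; lra).
  assert (0 < y) by (assert (Rmin (d/2) 1 <= 1) by apply Rmin_r; lra).
  specialize (Hs (1 - y ^ 2) ltac:(split; nra)).
  assert (Rpower y (2 * r) <= 1) by (apply rpow_le1; lra).
  pose proof (rpow_pos y (2*r)). pose proof (rpow_pos (1 - y^2) q).
  unfold U. rewrite Rminus_0_r. rewrite Rabs_left.
  - apply Rmult_lt_reg_r with (2 * q); [lra|]. field_simplify; [|lra]. nra.
  - apply Rmult_lt_reg_r with (2 * q); [lra|]. field_simplify; [|lra]. nra.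
Qed.

Lemma Mv_rec r q : 0 < r -> 0 < q -> Mv (r + 1) q = r / (r + q) * Mv r q.
Proof.
  intros Hr Hq.
  destruct (w_data r q Hr Hq) as [L0 [L1 [H0 [H1 [E [_ _]]]]]].
  destruct (w_data (r + 1) q ltac:(lra) Hq) as [L0' [L1' [H0' [H1' [E' [_ _]]]]]].
  assert (Id : forall y, 0 < y < 1 ->
     Pw (r + 1) q y - r / q * (Pw r q y - Pw (r + 1) q y) = U r q y - U r q (1/2)).
  { intros y Hy.
    assert (Z : forall r', Pw r' q (1/2) = 0) by (intros; unfold Pw; apply (@RInt_point R_CompleteNormedModule)).
    assert (I1 : is_RInt (fun t => w (r + 1) q t - r / q * (w r q t - w (r + 1) q t)) (1/2) y
        ((Pw (r + 1) q y - Pw (r + 1) q (1/2)) - r / q * ((Pw r q y - Pw r q (1/2)) - (Pw (r + 1) q y - Pw (r + 1) q (1/2))))).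
    { apply (@is_RInt_minus R_NormedModule); [apply Pw_int; lra|].
      apply (@is_RInt_scal R_NormedModule).
      apply (@is_RInt_minus R_NormedModule); apply Pw_int; lra. }
    assert (I2 : is_RInt (fun t => w (r + 1) q t - r / q * (w r q t - w (r + 1) q t)) (1/2) y (U r q y - U r q (1/2))).
    { apply (@is_RInt_derive R_CompleteNormedModule (U r q)).
      - intros x Hx. apply U_deriv; auto.
        split; [eapply Rlt_le_trans; [|apply Hx]; apply Rmin_glb_lt; lra
               |eapply Rle_lt_trans; [apply Hx|]; apply Rmax_lub_lt; lra].
      - intros x Hx. assert (0 < x < 1).
        { split; [eapply Rlt_le_trans; [|apply Hx]; apply Rmin_glb_lt; lra
                 |eapply Rle_lt_trans; [apply Hx|]; apply Rmax_lub_lt; lra]. }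
        apply cont_minus; [apply w_cont; auto|]. apply cont_scal. apply cont_minus; apply w_cont; auto. }
    rewrite !Z in I1.
    pose proof (is_RInt_unique _ _ _ _ I1) as U1. pose proof (is_RInt_unique _ _ _ _ I2) as U2.
    rewrite U1 in U2. rewrite <- U2. ring. }
  set (Phi := fun y => Pw (r + 1) q y - r / q * (Pw r q y - Pw (r + 1) q y)).
  assert (A0 : L0' - r / q * (L0 - L0') = 0 - U r q (1/2)).
  { apply (lim_unique Phi (F := at_right 0)).
    - apply lim_combo; auto.
    - apply (lim_ext (fun y => U r q y - U r q (1/2))).
      + eapply filter_imp; [|exact at_right0_01]. intros y Hy. unfold Phi. rewrite Id; auto.
      + apply (lim_plus _ (fun _ => - U r q (1/2))); [apply U_lim0; auto| apply lim_const]. }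
  assert (A1 : L1' - r / q * (L1 - L1') = 0 - U r q (1/2)).
  { apply (lim_unique Phi (F := at_left 1)).
    - apply lim_combo; auto.
    - apply (lim_ext (fun y => U r q y - U r q (1/2))).
      + eapply filter_imp; [|exact at_left1_01]. intros y Hy. unfold Phi. rewrite Id; auto.
      + apply (lim_plus _ (fun _ => - U r q (1/2))); [apply U_lim1; auto| apply lim_const]. }
  rewrite E, E'. apply Rmult_eq_reg_l with (r + q); [|lra].
  apply Rmult_eq_reg_l with (/ q); [|apply Rinv_neq_0_compat; lra].
  field_simplify; try lra.
  assert (K : (L1' - L0') - r / q * ((L1 - L0) - (L1' - L0')) = 0) by lra.
  field_simplify in K; try lra.
Qed.

Lemma Mv_poch r q k : 0 < r -> 0 < q -> Mv (r + INR k) q = Mv r q * poch r k / poch (r + q) k.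
Proof.
  intros Hr Hq. induction k as [|k IH].
  - simpl. rewrite Rplus_0_r. field.
  - rewrite S_INR. replace (r + (INR k + 1)) with ((r + INR k) + 1) by ring.
    pose proof (pos_INR k).
    rewrite Mv_rec by lra. rewrite IH. simpl poch.
    pose proof (poch_pos (r + q) k ltac:(lra)).
    field. split; lra.
Qed.

Lemma sqrt_ge_self x : 0 <= x <= 1 -> x <= sqrt x.
Proof.
  intros H. pose proof (sqrt_pos x). pose proof (sqrt_sqrt x (proj1 H)).
  assert (sqrt x <= 1) by (rewrite <- sqrt_1; apply sqrt_le_1; lra). nra.
Qed.

Lemma lim_g0 : filterlim (fun s => sqrt (1 - s)) (at_right 0) (at_left 1).
Proof.
  intros P HP. apply at_left1_elim in HP. destruct HP as [d [Hd HP]].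
  apply at_right0_intro. exists (Rmin d 1). split; [apply Rmin_glb_lt; lra|].
  intros s Hs. assert (s < d) by (eapply Rlt_le_trans; [apply Hs|apply Rmin_l]).
  assert (s < 1) by (eapply Rlt_le_trans; [apply Hs|apply Rmin_r]).
  apply HP. cbv beta. split.
  - pose proof (sqrt_ge_self (1 - s) ltac:(lra)). lra.
  - apply Rlt_le_trans with (sqrt 1); [apply sqrt_lt_1; lra| rewrite sqrt_1; lra].
Qed.

Lemma lim_g1 : filterlim (fun s => sqrt (1 - s)) (at_left 1) (at_right 0).
Proof.
  intros P HP. apply at_right0_elim in HP. destruct HP as [d [Hd HP]].
  apply at_left1_intro. exists (Rmin (d * d) 1). split; [apply Rmin_glb_lt; nra|].
  intros s Hs. assert (1 - s < d * d) by (assert (Rmin (d*d) 1 <= d * d) by apply Rmin_l; lra).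
  apply HP. cbv beta. split.
  - apply sqrt_lt_R0. lra.
  - rewrite <- (sqrt_square d) by lra. apply sqrt_lt_1; lra.
Qed.

Definition vB (q r s : R) := Rpower s (q - 1) * Rpower (1 - s) (r - 1).

Lemma sub_ident r q s : 0 < s < 1 ->
  -2 * ((- / (2 * sqrt (1 - s))) * w r q (sqrt (1 - s))) = vB q r s.
Proof.
  intros Hs. unfold w, vB.
  assert (Hy : 0 < 1 - s) by lra.
  rewrite pow2_sqrt by lra. replace (1 - (1 - s)) with s by ring.
  rewrite <- Rpower_sqrt by auto. rewrite Rpower_mult.
  replace (/ 2 * (2 * r - 1)) with ((r - 1) + / 2) by field.
  rewrite Rpower_plus. rewrite Rpower_sqrt by auto.
  pose proof (sqrt_lt_R0 _ Hy). field. lra.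
Qed.

Lemma Beta_Mv q r : 0 < q -> 0 < r -> Beta q r = 2 * Mv r q.
Proof.
  intros Hq Hr.
  destruct (w_data r q Hr Hq) as [L0 [L1 [H0 [H1 [E [_ _]]]]]].
  set (Pv := fun s => -2 * Pw r q (sqrt (1 - s))).
  assert (G : is_RInt_gen (vB q r) (at_right 0) (at_left 1) ((-2 * L0) - (-2 * L1))).
  { apply gen_of_prim with (Pr := Pv).
    - intros a b Ha Hb.
      assert (Hin : forall x, Rmin a b <= x <= Rmax a b -> 0 < x < 1).
      { intros x Hx. split; [eapply Rlt_le_trans; [|apply Hx]; apply Rmin_glb_lt; lra
                            |eapply Rle_lt_trans; [apply Hx|]; apply Rmax_lub_lt; lra]. }
      assert (Hg : forall x, 0 < x < 1 -> 0 < sqrt (1 - x) < 1).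
      { intros x Hx. split; [apply sqrt_lt_R0; lra| apply Rlt_le_trans with (sqrt 1); [apply sqrt_lt_1; lra| rewrite sqrt_1; lra]]. }
      pose proof (is_RInt_comp (V := R_CompleteNormedModule) (w r q) (fun s => sqrt (1 - s)) (fun s => - / (2 * sqrt (1 - s))) a b) as C.
      assert (C' : is_RInt (fun y => (- / (2 * sqrt (1 - y))) * w r q (sqrt (1 - y))) a b (RInt (w r q) (sqrt (1 - a)) (sqrt (1 - b)))).
      { apply C.
        - intros x Hx. apply w_cont. apply Hg, Hin; auto.
        - intros x Hx. specialize (Hin x Hx). split.
          + auto_derive; [lra|]. match goal with |- ?a = ?b => change (a = b :> R) end. unfold Rminus. field; apply Rgt_not_eq, sqrt_lt_R0; lra.
          + apply (@ex_derive_continuous R_AbsRing R_NormedModule). auto_derive. split; [lra|].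
            split; [|auto]. apply Rgt_not_eq. pose proof (sqrt_lt_R0 (1 + - x)). lra. }
      assert (ER : RInt (w r q) (sqrt (1 - a)) (sqrt (1 - b)) = Pw r q (sqrt (1 - b)) - Pw r q (sqrt (1 - a))).
      { apply (@is_RInt_unique R_CompleteNormedModule). apply Pw_int; apply Hg; auto. }
      rewrite ER in C'.
      apply (@is_RInt_scal R_NormedModule _ _ _ (-2)) in C'.
      eapply (@is_RInt_ext R_NormedModule); [|unfold Pv; replace (-2 * Pw r q (sqrt (1 - b)) - -2 * Pw r q (sqrt (1 - a))) with (scal (-2) (Pw r q (sqrt (1 - b)) - Pw r q (sqrt (1 - a)))) by (unfold scal; simpl; unfold mult; simpl; ring); exact C'].
      intros x Hx. assert (0 < x < 1) by (apply Hin; lra).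
      change (scal (-2) (- / (2 * sqrt (1 - x)) * w r q (sqrt (1 - x)))) with (-2 * (- / (2 * sqrt (1 - x)) * w r q (sqrt (1 - x)))).
      apply sub_ident; auto.
    - unfold Pv. apply lim_scal. apply (filterlim_comp _ _ _ _ _ _ _ _ lim_g0 H1).
    - unfold Pv. apply lim_scal. apply (filterlim_comp _ _ _ _ _ _ _ _ lim_g1 H0). }
  pose proof (@is_RInt_gen_unique R_CompleteNormedModule (at_right 0) (at_left 1) _ _ (vB q r) _ G) as G'.
  unfold Beta. change (RInt_gen (vB q r) (at_right 0) (at_left 1) = 2 * Mv r q).
  rewrite G', E. match goal with |- ?a = ?b => change (a = b :> R) end. ring.
Qed.

Lemma fun_choice {A : Type} (P : nat -> A -> Prop) : (forall k, exists a, P k a) -> exists f, forall k, P k (f k).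
Proof.
  intros H. exists (fun k => proj1_sig (constructive_indefinite_description _ (H k))).
  intros k. apply (proj2_sig (constructive_indefinite_description _ (H k))).
Qed.

Lemma iss_scal (a : nat -> R) l c : is_series a l -> is_series (fun n => c * a n) (c * l).
Proof. intros H. apply (@is_series_scal R_AbsRing R_NormedModule c a l H). Qed.

Lemma ex_RInt_cont01 (f : R -> R) a b : 0 < a < 1 -> 0 < b < 1 -> (forall t, 0 < t < 1 -> continuous f t) -> ex_RInt f a b.
Proof.
  intros Ha Hb Hc. apply (@ex_RInt_continuous R_CompleteNormedModule). intros z Hz. apply Hc.
  split; [eapply Rlt_le_trans; [|apply Hz]; apply Rmin_glb_lt; lra
         |eapply Rle_lt_trans; [apply Hz|]; apply Rmax_lub_lt; lra].
Qed.

Lemma prim_series (e : nat -> R) (g : nat -> R -> R) (wb h : R -> R) y :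
  0 < y < 1 -> ex_series (fun k => Rabs (e k)) ->
  (forall k t, 0 < t < 1 -> continuous (g k) t) -> (forall t, 0 < t < 1 -> continuous wb t) ->
  (forall t, 0 < t < 1 -> continuous h t) ->
  (forall t, 0 < t < 1 -> h t = Series (fun k => e k * g k t)) ->
  (forall k t, 0 < t < 1 -> Rabs (g k t) <= wb t) ->
  is_series (fun k => e k * RInt (g k) (1/2) y) (RInt h (1/2) y).
Proof.
  intros Hy He Hg Hw Hh Eh Hb.
  assert (Gen : forall a b, 0 < a < 1 -> 0 < b < 1 -> a <= b ->
     is_series (fun k => e k * RInt (g k) a b) (RInt h a b)).
  { intros a b Ha Hb' Hab.
    assert (Ein : forall x, Rmin a b < x < Rmax a b -> 0 < x < 1).
    { intros x Hx. split; [eapply Rle_lt_trans; [|apply Hx]; apply Rmin_glb; lra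
                          |eapply Rlt_le_trans; [apply Hx|]; apply Rmax_lub; lra]. }
    assert (EE : RInt h a b = RInt (fun t => Series (fun k => e k * g k t)) a b).
    { apply (@RInt_ext R_CompleteNormedModule). intros x Hx. apply Eh, Ein; auto. }
    rewrite EE. apply RInt_series with (w := wb); auto.
    - intros k. apply ex_RInt_cont01; auto.
    - apply ex_RInt_cont01; auto.
    - apply (@ex_RInt_ext R_NormedModule h). intros x Hx. apply Eh, Ein; auto. apply ex_RInt_cont01; auto.
    - intros k t Ht. apply Hb; lra. }
  destruct (Rle_dec (1/2) y) as [Hy2|Hy2].
  - apply Gen; lra.
  - assert (S := Gen y (1/2) Hy ltac:(lra) ltac:(lra)).
    apply iss_scal with (c := -1) in S.
    assert (Sw : forall f, (forall t, 0 < t < 1 -> continuous f t) -> RInt f (1/2) y = -1 * RInt f y (1/2)).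
    { intros f Hf.
      assert (E : - RInt f y (1/2) = RInt f (1/2) y)
        by (apply (@opp_RInt_swap R_CompleteNormedModule); apply ex_RInt_cont01; auto; lra).
      lra. }
    rewrite Sw by auto.
    eapply is_series_ext; [|exact S]. intros k. simpl. rewrite (Sw (g k)) by auto. ring.
Qed.

Lemma Pw_le_abs p q k y : 0 < p -> 0 < q -> 0 < y < 1 -> Rabs (Pw (p + INR k) q y) <= Rabs (Pw p q y).
Proof.
  intros Hp Hq Hy.
  assert (Z : forall r, Pw r q (1/2) = 0) by (intros; unfold Pw; apply (@RInt_point R_CompleteNormedModule)).
  destruct (Rle_dec (1/2) y) as [Hy2|Hy2].
  - pose proof (Pw_int (p + INR k) q (1/2) y ltac:(lra) Hy) as I1.
    pose proof (Pw_int p q (1/2) y ltac:(lra) Hy) as I2. rewrite Z in I1, I2.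
    assert (A1 : 0 <= Pw (p + INR k) q y - 0) by (apply (is_RInt_ge_0 _ _ _ _ Hy2 I1); intros; apply Rlt_le, w_pos).
    assert (A2 : Pw (p + INR k) q y - 0 <= Pw p q y - 0).
    { apply (is_RInt_le _ _ _ _ _ _ Hy2 I1 I2). intros; apply w_le; lra. }
    rewrite !Rabs_pos_eq; lra.
  - apply Rnot_le_lt in Hy2. pose proof (Pw_int (p + INR k) q y (1/2) Hy ltac:(lra)) as I1.
    pose proof (Pw_int p q y (1/2) Hy ltac:(lra)) as I2. rewrite Z in I1, I2.
    assert (A1 : 0 <= 0 - Pw (p + INR k) q y) by (apply (is_RInt_ge_0 _ _ _ _ (Rlt_le _ _ Hy2) I1); intros; apply Rlt_le, w_pos).
    assert (A2 : 0 - Pw (p + INR k) q y <= 0 - Pw p q y).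
    { apply (is_RInt_le _ _ _ _ _ _ (Rlt_le _ _ Hy2) I1 I2). intros; apply w_le; lra. }
    rewrite !Rabs_left1; lra.
Qed.

Lemma ps_cont (d : nat -> R) x t : entire d -> continuous (fun t => PSeries d (- (x * t) ^ 2 / 4)) t.
Proof.
  intros Hd. apply (continuous_comp (fun t => - (x * t) ^ 2 / 4) (PSeries d)).
  - apply (@ex_derive_continuous R_AbsRing R_NormedModule). auto_derive. auto.
  - apply continuity_pt_filterlim. apply PSeries_continuity. apply entire_lt; auto.
Qed.

Lemma aux_sq x t : - (x * t) ^ 2 / 4 = (- x ^ 2 / 4) * t ^ 2.
Proof. field. Qed.

Lemma raise (d : nat -> R) (p q x : R) : entire d -> 0 < p -> 0 < q ->
  is_RInt_gen (fun t => PSeries d (- (x * t) ^ 2 / 4) * w p q t) (at_right 0) (at_left 1)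
    (Mv p q * PSeries (fun k => d k * poch p k / poch (p + q) k) (- x ^ 2 / 4)).
Proof.
  intros Hd Hp Hq.
  set (z := - x ^ 2 / 4).
  set (e := fun k => d k * z ^ k).
  assert (He : ex_series (fun k => Rabs (e k))) by (apply (Hd z)).
  set (h := fun t => PSeries d (- (x * t) ^ 2 / 4) * w p q t).
  assert (Hpk : forall k, 0 < p + INR k) by (intros k; pose proof (pos_INR k); lra).
  assert (Hh : forall t, 0 < t < 1 -> continuous h t).
  { intros t Ht. apply cont_mult; [apply ps_cont; auto| apply w_cont; auto]. }
  assert (Eh : forall t, 0 < t < 1 -> h t = Series (fun k => e k * w (p + INR k) q t)).
  { intros t Ht. unfold h, PSeries. rewrite <- Series_scal_r. apply Series_ext. intros k.
    rewrite <- w_shift by lra. unfold e, z.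
    rewrite aux_sq, Rpow_mult_distr. ring. }
  set (Ph := fun y => (RInt h (1/2) y : R)).
  assert (Ser : forall y, 0 < y < 1 -> Ph y = Series (fun k => e k * Pw (p + INR k) q y)).
  { intros y Hy. symmetry. apply is_series_unique. unfold Ph, Pw.
    apply prim_series with (wb := w p q); auto.
    - intros; apply w_cont; auto.
    - intros; apply w_cont; auto.
    - intros k t Ht. rewrite Rabs_pos_eq by (apply Rlt_le, w_pos). apply w_le; auto. }
  destruct (Pw_bound p q Hp Hq) as [K HK].
  destruct (fun_choice (fun k (L : R) => filterlim (Pw (p + INR k) q) (at_right 0) (locally L) /\
                                   exists L1 : R, filterlim (Pw (p + INR k) q) (at_left 1) (locally L1) /\ Mv (p + INR k) q = L1 - L))
    as [l0 Hl0].
  { intros k. destruct (w_data (p + INR k) q (Hpk k) Hq) as [L0 [L1 [A0 [A1 [A2 _]]]]].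
    exists L0. split; auto. exists L1. auto. }
  destruct (fun_choice (fun k (L1 : R) => filterlim (Pw (p + INR k) q) (at_left 1) (locally L1) /\ Mv (p + INR k) q = L1 - l0 k))
    as [l1 Hl1].
  { intros k. destruct (Hl0 k) as [_ [L1 H]]. exists L1; auto. }
  assert (Bnd : forall y, 0 < y < 1 -> forall k, Rabs (Pw (p + INR k) q y) <= K).
  { intros y Hy k. eapply Rle_trans; [apply Pw_le_abs; auto| apply HK; auto]. }
  assert (T0 : filterlim Ph (at_right 0) (locally (Series (fun k => e k * l0 k)))).
  { apply (lim_ext (fun y => Series (fun k => e k * Pw (p + INR k) q y))).
    - eapply filter_imp; [|exact at_right0_01]. intros y Hy. rewrite Ser; auto.
    - apply tannery with (B := K); auto.
      + intros k; apply (Hl0 k).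
      + eapply filter_imp; [|exact at_right0_01]. intros y Hy. apply Bnd; auto. }
  assert (T1 : filterlim Ph (at_left 1) (locally (Series (fun k => e k * l1 k)))).
  { apply (lim_ext (fun y => Series (fun k => e k * Pw (p + INR k) q y))).
    - eapply filter_imp; [|exact at_left1_01]. intros y Hy. rewrite Ser; auto.
    - apply tannery with (B := K); auto.
      + intros k; apply (Hl1 k).
      + eapply filter_imp; [|exact at_left1_01]. intros y Hy. apply Bnd; auto. }
  pose proof (gen_of_prim h Ph _ _ (prim_RInt h Hh) T0 T1) as G.
  replace (Mv p q * PSeries (fun k => d k * poch p k / poch (p + q) k) z)
    with (Series (fun k => e k * l1 k) - Series (fun k => e k * l0 k)); [exact G|].
  assert (Bl0 : forall k, Rabs (l0 k) <= K).
  { intros k. apply (lim_bound (Pw (p + INR k) q) (l0 k) K (proj1 (Hl0 k))).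
    eapply filter_imp; [|exact at_right0_01]. intros y Hy. apply Bnd; auto. }
  assert (Bl1 : forall k, Rabs (l1 k) <= K).
  { intros k. apply (lim_bound (Pw (p + INR k) q) (l1 k) K (proj1 (Hl1 k))).
    eapply filter_imp; [|exact at_left1_01]. intros y Hy. apply Bnd; auto. }
  rewrite <- Series_minus; [|apply (series_bounded_ex e l1 K); auto| apply (series_bounded_ex e l0 K); auto].
  unfold PSeries. rewrite <- Series_scal_l. apply Series_ext. intros k.
  replace (e k * l1 k - e k * l0 k) with (e k * (l1 k - l0 k)) by ring.
  rewrite <- (proj2 (Hl1 k)). rewrite Mv_poch by auto. unfold e, z. field.
  apply Rgt_not_eq, poch_pos. lra.
Qed.

Definition ua (al : R) (k : nat) := / (INR (fact k) * poch al k).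

Lemma ua_S al k : 0 < al -> ua al (S k) = ua al k / (INR (S k) * (al + INR k)).
Proof.
  intros Hal. unfold ua. rewrite fact_simpl, mult_INR. simpl poch.
  pose proof (INR_fact_lt_0 k). pose proof (poch_pos al k Hal). pose proof (pos_INR k).
  rewrite S_INR. field. repeat split; lra.
Qed.

Lemma ua_cF al k : 0 < al -> ua al k = cF 1 1 al k.
Proof.
  intros Hal. unfold ua, cF. pose proof (INR_fact_lt_0 k). pose proof (poch_pos al k Hal).
  pose proof (poch_pos 1 k ltac:(lra)). field. repeat split; lra.
Qed.

Lemma entire_ua al : 0 < al -> entire (ua al).
Proof.
  intros Hal. apply entire_le with (d := cF 1 1 al); [|apply entire_cF; lra].
  intros n. rewrite ua_cF; auto. lra.
Qed.

Lemma telescope (G : nat -> R) n : sum_f_R0 (fun j => G (S j) - G j) n = G (S n) - G 0%nat.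
Proof. induction n; simpl; [ring|]. rewrite IHn. ring. Qed.

Section Prod.
Variable a : R.
Hypothesis Ha : 0 < a.
Local Notation al := (a + 1/2).
Local Notation u := (ua (a + 1/2)).
Local Notation Sn n := (sum_f_R0 (fun j => ua (a + 1/2) j * ua (a + 1/2) (n - j)%nat) n).

Lemma zeil n j : (j <= n)%nat ->
  (- (4 * a + 4 * INR n)) * (u j * u (n - j)%nat) + ((INR n + 1) * (al + INR n) * (2 * a + INR n)) * (u j * u (S n - j)%nat)
  = (u (S j) * u (S n - S j)%nat * INR (S j) * (al + INR (S j) - 1) * (2 * INR (S j) - 3 * INR n - 2 * a - 2))
    - (u j * u (S n - j)%nat * INR j * (al + INR j - 1) * (2 * INR j - 3 * INR n - 2 * a - 2)).
Proof.
  intros Hj. replace (S n - S j)%nat with (n - j)%nat by lia.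
  replace (S n - j)%nat with (S (n - j)) by lia.
  rewrite !ua_S by lra.
  rewrite !S_INR. rewrite !minus_INR by auto.
  pose proof (pos_INR j). pose proof (pos_INR n).
  assert (INR j <= INR n) by (apply le_INR; auto).
  field. repeat split; lra.
Qed.

Lemma Sn_rec n : ((INR n + 1) * (al + INR n) * (2 * a + INR n)) * Sn (S n) = (4 * a + 4 * INR n) * Sn n.
Proof.
  set (c1 := (INR n + 1) * (al + INR n) * (2 * a + INR n)).
  set (G := fun j => u j * u (S n - j)%nat * INR j * (al + INR j - 1) * (2 * INR j - 3 * INR n - 2 * a - 2)).
  assert (T := telescope G n).
  rewrite (sum_eq _ (fun j => (- (4 * a + 4 * INR n)) * (u j * u (n - j)%nat) + c1 * (u j * u (S n - j)%nat))) in T.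
  2:{ intros j Hj. unfold G. rewrite zeil by auto. reflexivity. }
  rewrite plus_sum in T.
  rewrite (sum_eq _ (fun j => (u j * u (n - j)%nat) * (- (4 * a + 4 * INR n)))) in T by (intros; ring).
  rewrite (sum_eq (fun j => c1 * (u j * u (S n - j)%nat)) (fun j => (u j * u (S n - j)%nat) * c1)) in T by (intros; ring).
  rewrite <- !scal_sum in T.
  rewrite tech5. replace (S n - S n)%nat with 0%nat by lia.
  unfold G in T. replace (S n - 0)%nat with (S n) in T by lia.
  replace (S n - S n)%nat with 0%nat in T by lia.
  rewrite S_INR in T. change (INR 0) with 0 in T.
  assert (E : c1 * (u (S n) * u 0%nat) + (u (S n) * u 0%nat * (INR n + 1) * (al + (INR n + 1) - 1) *
      (2 * (INR n + 1) - 3 * INR n - 2 * a - 2) - u 0%nat * u (S n) * 0 * (al + 0 - 1) * (2 * 0 - 3 * INR n - 2 * a - 2)) = 0)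
    by (unfold c1; ring).
  lra.
Qed.

Lemma Sn_closed n : Sn n = cF a al (2 * a) n * 4 ^ n.
Proof.
  induction n as [|n IH].
  - unfold ua, cF. simpl. field.
  - assert (R := Sn_rec n). rewrite IH in R.
    pose proof (pos_INR n).
    apply Rmult_eq_reg_l with ((INR n + 1) * (al + INR n) * (2 * a + INR n)).
    2:{ apply Rgt_not_eq. apply Rmult_lt_0_compat; [apply Rmult_lt_0_compat|]; lra. }
    rewrite R. unfold cF. rewrite fact_simpl, mult_INR. simpl poch. simpl pow. rewrite S_INR.
    pose proof (INR_fact_lt_0 n). pose proof (poch_pos al n ltac:(lra)). pose proof (poch_pos (2 * a) n ltac:(lra)).
    field. repeat split; lra.
Qed.
End Prod.

Lemma JJ_PS al x : JJ al x = PSeries (ua (al + 1)) (- x ^ 2 / 4).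
Proof. unfold JJ, PSeries, ua. apply Series_ext. intros n. unfold Rdiv. ring. Qed.

Lemma product_formula a z : 0 < a -> JJ (a - 1/2) z ^ 2 = F12 a (a + 1/2) (2 * a) (2 * z).
Proof.
  intros Ha. rewrite JJ_PS. replace (a - 1/2 + 1) with (a + 1/2) by field.
  rewrite F12_PS. match goal with |- ?P ^ 2 = _ => replace (P ^ 2) with (P * P) by ring end.
  rewrite <- PSeries_mult by (apply entire_lt, entire_ua; lra).
  unfold PSeries. apply Series_ext. intros n.
  unfold PS_mult. rewrite (Sn_closed a Ha n).
  replace (- (2 * z) ^ 2 / 4) with (4 * (- z ^ 2 / 4)) by field.
  rewrite Rpow_mult_distr. ring.
Qed.

Lemma exps (A : nat -> R) w : Rbar_lt (Rabs w) (CV_radius A) -> ex_series (fun k => A k * w ^ k).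
Proof.
  intros H. apply ex_series_Rabs. apply CV_disk_inside. auto.
Qed.

Section Bessel.
Variable a : R.
Hypothesis Ha : 0 < a.
Local Notation al := (a + 1/2).
Local Notation u0 := (ua (a + 1/2)).
Definition u1 := PS_derive (ua (a + 1/2)).
Definition u2 := PS_derive (PS_derive (ua (a + 1/2))).

Lemma rad0 : CV_radius u0 = p_infty.
Proof. apply entire_CV, entire_ua; lra. Qed.
Lemma rad1 : CV_radius u1 = p_infty.
Proof. unfold u1. rewrite CV_radius_derive. apply rad0. Qed.
Lemma rad2 : CV_radius u2 = p_infty.
Proof. unfold u2. rewrite !CV_radius_derive. apply rad0. Qed.

Definition G0 w := PSeries u0 w.
Definition G1 w := PSeries u1 w.
Definition G2 w := PSeries u2 w.

Lemma G0_der w : is_derive G0 w (G1 w).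
Proof. apply is_derive_PSeries. rewrite rad0. simpl; auto. Qed.
Lemma G1_der w : is_derive G1 w (G2 w).
Proof. apply is_derive_PSeries. rewrite rad1. simpl; auto. Qed.

Lemma incr0 (A : nat -> R) : PS_incr_1 A 0 = 0.
Proof. reflexivity. Qed.
Lemma incrS (A : nat -> R) m : PS_incr_1 A (S m) = A m.
Proof. reflexivity. Qed.

Lemma coef_id k : PS_incr_1 u2 k + al * u1 k = u0 k.
Proof.
  unfold u1, u2, PS_derive. destruct k as [|m].
  - rewrite incr0.
    rewrite (ua_S al 0) by lra. simpl INR. unfold ua. simpl. field. lra.
  - rewrite incrS.
    rewrite (ua_S al (S m)) by lra.
    pose proof (pos_INR m). rewrite !S_INR. field. lra.
Qed.

Lemma G_ode w : w * G2 w + al * G1 w = G0 w.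
Proof.
  unfold G0, G1, G2. rewrite <- PSeries_incr_1. unfold PSeries.
  rewrite <- Series_scal_l. rewrite <- Series_plus.
  - apply Series_ext. intros k. rewrite <- coef_id. ring.
  - apply exps. rewrite CV_radius_incr_1, rad2. simpl; auto.
  - apply exs_scal. apply exps. rewrite rad1. simpl; auto.
Qed.

Definition ff x := G0 (- x ^ 2 / 4).
Definition fd x := G1 (- x ^ 2 / 4) * (- x / 2).
Definition fdd x := G2 (- x ^ 2 / 4) * (x ^ 2 / 4) - G1 (- x ^ 2 / 4) / 2.

Lemma scal_R (x y : R) : scal x y = x * y.
Proof. reflexivity. Qed.

Lemma ff_der x : is_derive ff x (fd x).
Proof.
  unfold ff, fd. eapply der_eq.
  - apply (is_derive_comp G0 (fun x => - x ^ 2 / 4)); [apply G0_der|]. auto_derive; auto.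
  - rewrite scal_R. match goal with |- ?a = ?b => change (a = b :> R) end. field.
Qed.

Lemma fd_der x : is_derive fd x (fdd x).
Proof.
  unfold fd, fdd. eapply der_eq.
  - apply der_mult; [|auto_derive; auto].
    apply (is_derive_comp G1 (fun x => - x ^ 2 / 4)); [apply G1_der|]. auto_derive; auto.
  - unfold scal; simpl; unfold mult; simpl. match goal with |- ?a = ?b => change (a = b :> R) end. field.
Qed.

Lemma ff_ode x : x * fdd x + 2 * a * fd x + x * ff x = 0.
Proof.
  unfold ff, fd, fdd. pose proof (G_ode (- x ^ 2 / 4)) as E.
  replace (G0 (- x ^ 2 / 4)) with (- x ^ 2 / 4 * G2 (- x ^ 2 / 4) + al * G1 (- x ^ 2 / 4)) by auto.
  field.
Qed.

Lemma ff_cont x : continuous ff x.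
Proof. apply (@ex_derive_continuous R_AbsRing R_NormedModule). eexists; apply ff_der. Qed.
Lemma fd_cont x : continuous fd x.
Proof. apply (@ex_derive_continuous R_AbsRing R_NormedModule). eexists; apply fd_der. Qed.

Lemma ff_0 : ff 0 = 1.
Proof. unfold ff, G0. replace (- 0 ^ 2 / 4) with 0 by field. rewrite PSeries_0. unfold ua. simpl. field. Qed.

Lemma ff_JJ x : JJ (a - 1/2) x = ff x.
Proof. rewrite JJ_PS. unfold ff, G0. replace (a - 1/2 + 1) with (a + 1/2) by field. auto. Qed.

Definition yy x := Rpower x a * ff x.
Definition yd x := Rpower x a * (fd x + a / x * ff x).

Lemma yy_der x : 0 < x -> is_derive yy x (yd x).
Proof.
  intros Hx. unfold yy, yd. eapply der_eq.
  - apply der_mult; [apply rpow_deriv; auto| apply ff_der].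
  - rewrite rpow_m1 by auto. match goal with |- ?a = ?b => change (a = b :> R) end. field. lra.
Qed.

Lemma yd_der x : 0 < x -> is_derive yd x (- (1 - a * (a - 1) / x ^ 2) * yy x).
Proof.
  intros Hx. unfold yd, yy. eapply der_eq.
  - apply der_mult; [apply rpow_deriv; auto|].
    apply der_plus; [apply fd_der|].
    apply (der_ext (fun y => a * (ff y * / y))); [intros; unfold Rdiv; ring|].
    apply is_derive_scal. apply der_mult; [apply ff_der|]. auto_derive; [lra| reflexivity].
  - rewrite rpow_m1 by auto.
    assert (O := ff_ode x).
    assert (Fe : fdd x = - (2 * a * fd x + x * ff x) / x).
    { apply Rmult_eq_reg_l with x; [|lra].
      replace (x * (- (2 * a * fd x + x * ff x) / x)) with (- (2 * a * fd x + x * ff x)) by (field; lra). lra. }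
    rewrite Fe.
    match goal with |- ?a = ?b => change (a = b :> R) end.
    field. lra.
Qed.

Lemma no_pos_forever : ~ (forall x, 0 < x -> 0 < ff x).
Proof.
  intros Hpos.
  set (L := 2 * a + 1).
  set (s := fun x => sin ((x - L) / 2)).
  set (sd := fun x => cos ((x - L) / 2) / 2).
  set (W := fun x => yy x * sd x - yd x * s x).
  set (W' := fun x => yy x * s x * (3/4 - a * (a - 1) / x ^ 2)).
  assert (HL : 0 < L) by (unfold L; lra).
  assert (Wd : forall x, 0 < x -> is_derive W x (W' x)).
  { intros x Hx. unfold W, W'. eapply der_eq.
    - apply der_minus; apply der_mult.
      + apply yy_der; auto.
      + unfold sd. auto_derive; auto.
      + apply yd_der; auto.
      + unfold s. auto_derive; auto.
    - unfold s, sd. match goal with |- ?a = ?b => change (a = b :> R) end.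
      replace ((x + - L) * / 2) with ((x - L) / 2) by (unfold Rminus, Rdiv; ring). field. lra. }
  assert (Wc : forall x, 0 < x -> continuity_pt W x).
  { intros x Hx. apply continuity_pt_filterlim. apply (@ex_derive_continuous R_AbsRing R_NormedModule).
    eexists; apply Wd; auto. }
  destruct (MVT_gen W L (L + 2 * PI) W') as [c [Hc E]].
  { intros x Hx. apply Wd. rewrite Rmin_left in Hx; pose proof PI_RGT_0; lra. }
  { intros x Hx. apply Wc. rewrite Rmin_left in Hx; pose proof PI_RGT_0; lra. }
  pose proof PI_RGT_0.
  rewrite Rmin_left, Rmax_right in Hc by lra.
  assert (WL : W L = yy L / 2).
  { unfold W, s, sd. replace ((L - L) / 2) with 0 by field. rewrite sin_0, cos_0. field. }
  assert (WR : W (L + 2 * PI) = - (yy (L + 2 * PI) / 2)).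
  { unfold W, s, sd. replace ((L + 2 * PI - L) / 2) with PI by field. rewrite sin_PI, cos_PI. field. }
  assert (yL : 0 < yy L) by (unfold yy; apply Rmult_lt_0_compat; [apply rpow_pos| apply Hpos; auto]).
  assert (yR : 0 < yy (L + 2 * PI)) by (unfold yy; apply Rmult_lt_0_compat; [apply rpow_pos| apply Hpos; lra]).
  assert (Wc0 : 0 <= W' c).
  { unfold W'. apply Rmult_le_pos; [apply Rmult_le_pos|].
    - unfold yy. apply Rlt_le, Rmult_lt_0_compat; [apply rpow_pos| apply Hpos; lra].
    - unfold s. apply sin_ge_0; lra.
    - assert (a * (a - 1) <= 3/4 * c ^ 2).
      { assert (L <= c) by lra. assert (L ^ 2 <= c ^ 2) by (apply pow_incr; lra).
        unfold L in *. nra. }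
      assert (0 < c ^ 2) by (apply pow_lt; lra).
      apply Rmult_le_reg_r with (c ^ 2); auto. rewrite Rmult_0_l.
      replace ((3 / 4 - a * (a - 1) / c ^ 2) * c ^ 2) with (3/4 * c ^ 2 - a * (a - 1)) by (field; lra). lra. }
  assert (W (L + 2 * PI) - W L < 0) by lra.
  rewrite E in H0. nra.
Qed.

End Bessel.

Lemma bessel_zero a : 0 < a -> exists z, 0 < z /\ JJ (a - 1/2) z = 0.
Proof.
  intros Ha. apply Classical_Prop.NNPP. intros N.
  apply (no_pos_forever a Ha). intros x Hx.
  destruct (Rlt_le_dec 0 (ff a x)) as [|Hle]; auto. exfalso.
  assert (Hc : continuity (ff a)).
  { intros y. apply continuity_pt_filterlim. apply ff_cont; auto. }
  destruct (IVT_gen (ff a) 0 x 0 Hc) as [c [Hc1 Hc2]].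
  { rewrite ff_0 by auto. rewrite Rmin_right, Rmax_left by lra. lra. }
  rewrite Rmin_left, Rmax_right in Hc1 by lra.
  destruct (Req_dec c 0) as [->|Hc0].
  - rewrite ff_0 in Hc2 by auto; lra.
  - apply N. exists c. split; [lra|]. rewrite ff_JJ; auto.
Qed.

Lemma F12_sym a b c x : F12 a b c x = F12 a c b x.
Proof. unfold F12. apply Series_ext. intros n. f_equal. f_equal. ring. Qed.

Lemma F12_0 a b c : F12 a b c 0 = 1.
Proof. rewrite F12_PS. replace (- 0 ^ 2 / 4) with 0 by field. rewrite PSeries_0. unfold cF. simpl. field. Qed.

Lemma F12_cont a b c x t : 0 < a -> 0 < b -> 0 < c -> continuous (fun t => F12 a b c (x * t)) t.
Proof.
  intros. apply (continuous_ext (fun t => PSeries (cF a b c) (- (x * t) ^ 2 / 4))).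
  - intros; rewrite F12_PS; auto.
  - apply ps_cont. apply entire_cF; auto.
Qed.

Lemma raise_F12 a b c q x : 0 < a -> 0 < b -> 0 < c -> 0 < q ->
  is_RInt_gen (fun t => F12 a b c (x * t) * w c q t) (at_right 0) (at_left 1) (Mv c q * F12 a b (c + q) x).
Proof.
  intros Ha Hb Hc Hq.
  pose proof (raise (cF a b c) c q x (entire_cF a b c Ha Hb Hc) Hc Hq) as R.
  replace (F12 a b (c + q) x) with (PSeries (fun k => cF a b c k * poch c k / poch (c + q) k) (- x ^ 2 / 4)).
  2:{ rewrite F12_PS. apply PSeries_ext. intros k. unfold cF.
      pose proof (INR_fact_lt_0 k). pose proof (poch_pos a k Ha). pose proof (poch_pos b k Hb).
      pose proof (poch_pos c k Hc). pose proof (poch_pos (c + q) k ltac:(lra)).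
      field. repeat split; lra. }
  eapply is_RInt_gen_ext; [|exact R].
  apply filter_forall. intros ab y _. rewrite F12_PS. auto.
Qed.

Lemma pos_of_prod M F : 0 < M -> 0 < M * F -> 0 < F.
Proof. intros HM HP. destruct (Rlt_le_dec 0 F) as [|H]; auto. exfalso. nra. Qed.

Lemma pos_raise_weak a b c q x : 0 < a -> 0 < b -> 0 < c -> 0 < q ->
  (forall y, 0 < y -> 0 <= F12 a b c y) -> 0 < x -> 0 < F12 a b (c + q) x.
Proof.
  intros Ha Hb Hc Hq Hnn Hx.
  pose proof (raise_F12 a b c q x Ha Hb Hc Hq) as G.
  apply (pos_of_prod (Mv c q)); [apply Mv_pos; auto|].
  assert (Hh := F12_cont a b c x 0 Ha Hb Hc).
  assert (Hh2 : 0 < 1/2) by lra.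
  destruct (proj1 (filterlim_locally _ _) Hh (mkposreal _ Hh2)) as [d Hd].
  set (t0 := Rmin (d/2) (1/2)).
  assert (Ht0 : 0 < t0 < 1) by (unfold t0; pose proof (cond_pos d); split; [apply Rmin_glb_lt; lra| pose proof (Rmin_r (d/2) (1/2)); lra]).
  assert (V : 1/2 < F12 a b c (x * t0)).
  { assert (B : ball 0 d t0).
    { change (Rabs (t0 - 0) < d). rewrite Rminus_0_r, Rabs_pos_eq by lra.
      pose proof (Rmin_l (d/2) (1/2)). pose proof (cond_pos d). unfold t0 in *. lra. }
    specialize (Hd t0 B). change (Rabs (F12 a b c (x * t0) - F12 a b c (x * 0)) < 1/2) in Hd.
    rewrite Rmult_0_r, F12_0 in Hd. apply Rabs_def2 in Hd. lra. }
  apply (int_pos (fun t => F12 a b c (x * t) * w c q t) t0); auto.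
  - intros t Ht. apply cont_mult; [apply F12_cont; auto| apply w_cont; auto].
  - intros t Ht. apply Rmult_le_pos; [apply Hnn; nra| apply Rlt_le, w_pos].
  - apply Rmult_lt_0_compat; [lra| apply w_pos].
Qed.

Lemma base_nonneg a y : 0 < a -> 0 <= F12 a (a + 1/2) (2 * a) y.
Proof.
  intros Ha. replace y with (2 * (y / 2)) by field. rewrite <- product_formula by auto.
  apply pow2_ge_0.
Qed.

Lemma caseA a b c : 0 < a -> a + 1/2 <= b -> 2 * a <= c -> 3 * a + 1/2 < b + c ->
  forall x, 0 < x -> 0 < F12 a b c x.
Proof.
  intros Ha Hb Hc Hs x Hx.
  destruct (Rlt_le_dec (2 * a) c) as [Hc'|Hc'].
  - assert (G1 : forall y, 0 < y -> 0 < F12 a (a + 1/2) c y).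
    { intros y Hy. replace c with (2 * a + (c - 2 * a)) by ring.
      apply pos_raise_weak; try lra. intros; apply base_nonneg; auto. }
    destruct (Rlt_le_dec (a + 1/2) b) as [Hb'|Hb'].
    + rewrite F12_sym. replace b with ((a + 1/2) + (b - (a + 1/2))) by ring.
      apply pos_raise_weak; try lra. intros y Hy. rewrite F12_sym. apply Rlt_le, G1; auto.
    + replace b with (a + 1/2) by lra. apply G1; auto.
  - replace c with (2 * a) in * by lra.
    rewrite F12_sym. replace b with ((a + 1/2) + (b - (a + 1/2))) by ring.
    apply pos_raise_weak; try lra. intros y Hy. rewrite F12_sym. apply base_nonneg; auto.
Qed.

Lemma Jzero a : 0 < a -> exists x, 0 < x /\ F12 a (a + 1/2) (2 * a) x = 0.
Proof.
  intros Ha. destruct (bessel_zero a Ha) as [z [Hz Ez]]. exists (2 * z). split; [lra|].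
  rewrite <- product_formula by auto. rewrite Ez. ring.
Qed.

Theorem theorem2 (a : R) (ha : 0 < a) :
  (forall b c : R,
      ((a + 1/2 <= b /\ 2 * a <= c) \/ (2 * a <= b /\ a + 1/2 <= c)) ->
      3 * a + 1/2 < b + c ->
      P12 a b c) /\
  ((forall b : R, P12 a b (2 * a) <-> a + 1/2 < b) /\
   (forall delta x : R, 0 < delta -> 0 < x ->
      exists I : R,
        is_RInt_gen
          (fun t => (JJ (a - 1/2) (x * t / 2)) ^ 2
                    * Rpower (1 - t ^ 2) (delta - 1) * Rpower t (2 * a))
          (at_right 0) (at_left 1) I /\
        F12 a (a + 1/2 + delta) (2 * a) x = 2 / Beta delta (a + 1/2) * I /\
        0 < F12 a (a + 1/2 + delta) (2 * a) x)) /\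
  ((forall c : R, P12 a (a + 1/2) c <-> 2 * a < c) /\
   (forall eps x : R, 0 < eps -> 0 < x ->
      exists I : R,
        is_RInt_gen
          (fun t => (JJ (a - 1/2) (x * t / 2)) ^ 2
                    * Rpower (1 - t ^ 2) (eps - 1) * Rpower t (4 * a - 1))
          (at_right 0) (at_left 1) I /\
        F12 a (a + 1/2) (2 * a + eps) x = 2 / Beta eps (2 * a) * I /\
        0 < F12 a (a + 1/2) (2 * a + eps) x)).
Proof.
  assert (Part1 : forall b c : R,
      ((a + 1/2 <= b /\ 2 * a <= c) \/ (2 * a <= b /\ a + 1/2 <= c)) ->
      3 * a + 1/2 < b + c -> P12 a b c).
  { intros b c [[Hb Hc]|[Hb Hc]] Hs.
    - repeat split; try lra. apply caseA; auto.
    - repeat split; try lra. intros x Hx. rewrite F12_sym. apply caseA; lra. }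
  assert (Iff1 : forall b : R, P12 a b (2 * a) <-> a + 1/2 < b).
  { intros b. split.
    - intros [_ [Hb [_ Hp]]]. destruct (Rlt_le_dec (a + 1/2) b) as [|Hle]; auto. exfalso.
      destruct (Jzero a ha) as [x [Hx Ex]].
      destruct (Req_dec b (a + 1/2)) as [->|Hne].
      + specialize (Hp x Hx). lra.
      + assert (0 < F12 a (a + 1/2) (2 * a) x); [|lra].
        rewrite F12_sym. replace (a + 1/2) with (b + (a + 1/2 - b)) by ring.
        apply pos_raise_weak; try lra. intros y Hy. rewrite F12_sym. apply Rlt_le, Hp; auto.
    - intros Hb. apply Part1; lra. }
  assert (Iff2 : forall c : R, P12 a (a + 1/2) c <-> 2 * a < c).
  { intros c. split.
    - intros [_ [_ [Hc Hp]]]. destruct (Rlt_le_dec (2 * a) c) as [|Hle]; auto. exfalso.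
      destruct (Jzero a ha) as [x [Hx Ex]].
      destruct (Req_dec c (2 * a)) as [->|Hne].
      + specialize (Hp x Hx). lra.
      + assert (0 < F12 a (a + 1/2) (2 * a) x); [|lra].
        replace (2 * a) with (c + (2 * a - c)) by ring.
        apply pos_raise_weak; try lra. intros y Hy. apply Rlt_le, Hp; auto.
    - intros Hc. apply Part1; lra. }
  assert (ExtJ : forall (r q x : R), 0 < q -> r = 2 * (a + 1/2) - 1 \/ r = 2 * (2 * a) - 1 ->
      filter_prod (at_right 0) (at_left 1) (fun ab => forall t, Rmin (fst ab) (snd ab) < t < Rmax (fst ab) (snd ab) ->
        F12 a (a + 1/2) (2 * a) (x * t) * (Rpower t r * Rpower (1 - t ^ 2) (q - 1)) =
        JJ (a - 1/2) (x * t / 2) ^ 2 * Rpower (1 - t ^ 2) (q - 1) * Rpower t r)).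
  { intros r q x Hq _. apply Filter_prod with (Q := fun y => 0 < y < 1) (R := fun y => 0 < y < 1);
      [apply at_right0_01| apply at_left1_01|].
    intros u v Hu Hv t Ht. rewrite product_formula by auto.
    replace (2 * (x * t / 2)) with (x * t) by field. ring. }
  split; [exact Part1|]. split; [split; [exact Iff1|]|split; [exact Iff2|]].
  - intros delta x Hd Hx.
    assert (Pos : 0 < F12 a (a + 1/2 + delta) (2 * a) x) by (apply Iff1; lra).
    exists (Mv (a + 1/2) delta * F12 a (a + 1/2 + delta) (2 * a) x). split; [|split; auto].
    + pose proof (raise_F12 a (2 * a) (a + 1/2) delta x ha ltac:(lra) ltac:(lra) Hd) as R.
      rewrite <- F12_sym in R.
      eapply is_RInt_gen_ext; [|exact R].
      eapply filter_imp; [|apply (ExtJ (2 * a) delta x Hd); left; field].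
      intros [u v] HH t Ht. simpl in *. rewrite F12_sym. unfold w.
      replace (2 * (a + 1/2) - 1) with (2 * a) by field. apply HH; auto.
    + rewrite Beta_Mv by lra. pose proof (Mv_pos (a + 1/2) delta ltac:(lra) Hd). field. lra.
  - intros eps x He Hx.
    assert (Pos : 0 < F12 a (a + 1/2) (2 * a + eps) x) by (apply Iff2; lra).
    exists (Mv (2 * a) eps * F12 a (a + 1/2) (2 * a + eps) x). split; [|split; auto].
    + pose proof (raise_F12 a (a + 1/2) (2 * a) eps x ha ltac:(lra) ltac:(lra) He) as R.
      eapply is_RInt_gen_ext; [|exact R].
      eapply filter_imp; [|apply (ExtJ (4 * a - 1) eps x He); right; ring].
      intros [u v] HH t Ht. simpl in *. unfold w.
      replace (2 * (2 * a) - 1) with (4 * a - 1) by ring. apply HH; auto.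
    + rewrite Beta_Mv by lra. pose proof (Mv_pos (2 * a) eps ltac:(lra) He). field. lra.
Qed.
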